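(* For every well-named $\mu$-sentence $\varphi$, if $\mathsf{lab}\mu\mathsf{CK}_\omega\vdash\varphi$ then $\mathsf{CK}\models\varphi$. More precisely: if $M=\langle W,W^\bot,\preceq,R,V\rangle$ is a $\mathsf{CK}$-model and $w\in W$ with $M,w\not\models\varphi$, then no pre-proof with root $\vdash x:\varphi$ is a $\mathsf{lab}\mu\mathsf{CK}_\omega$-proof.
   Context: Syntax. Fix disjoint sets $\mathrm{Prop}$ (propositions) and $\mathrm{Var}$ (propositional variables). $\mu$-formulas are given by $\varphi::=P\mid X\mid\bot\mid\varphi\land\varphi\mid\varphi\lor\varphi\mid\varphi\to\varphi\mid\Box\varphi\mid\Diamond\varphi\mid\mu X.\varphi\mid\nu X.\varphi$ with $P\in\mathrm{Prop}$, $X\in\mathrm{Var}$, where $\mu X.\varphi$ and $\nu X.\varphi$ may only be formed when $X$ is positive in $\varphi$. Positivity/negativity is defined inductively: $X$ is both positive and negative in $P$, in $\bot$, and in any variable $Y\neq X$; $X$ is positive in $X$; if $X$ is positive (resp. negative) in $\varphi$ and $\psi$, then it is positive (resp. negative) in $\varphi\land\psi$, $\varphi\lor\psi$, $\Box\varphi$, $\Diamond\varphi$; if $X$ is negative (resp. positive) in $\varphi$ and positive (resp. negative) in $\psi$, then $X$ is positive (resp. negative) in $\varphi\to\psi$; $X$ is both positive and negative in $\mu X.\varphi$ and $\nu X.\varphi$. $\eta$ ranges over $\{\mu,\nu\}$. A sentence has no free variables. $\varphi$ is guarded if for every subformula $\eta X.\psi$, every occurrence of $X$ in $\psi$ is in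 the scope of $\Box$ or $\Diamond$; well-bounded if each variable occurring bound in $\varphi$ is bound by exactly one fixed-point operator $\eta X$ in $\varphi$; well-named if guarded and well-bounded. For well-named $\varphi$ and a subformula $\eta X.\psi$, write $\psi_X:=\psi$. An auxiliary ''local diamond'' $\hat\Diamond\psi$ is also used (semantics: $w\models\hat\Diamond\psi$ iff some $v$ with $wRv$ has $v\models\psi$). Models and semantics. A $\mathsf{CK}$-model is $M=\langle W,W^\bot,\preceq,R,V\rangle$ with $W\neq\emptyset$, $W^\bot\subseteq W$, $\preceq$ reflexive transitive on $W$, $R$ a binary relation on $W$, $V:\mathrm{Prop}\to\mathcal P(W)$, such that $w\preceq v$, $w\in V(P)$ imply $v\in V(P)$; $W^\bot\subseteq V(P)$ for all $P$; $W^\bot$ closed under $\preceq$ and $R$. $\|P\|=V(P)$; $\|\bot\|=W^\bot$; $\land,\lor$ pointwise; $\|\varphi\to\psi\|=\{w\mid\forall v\succeq w\,(v\in\|\varphi\|\Rightarrow v\in\|\psi\|)\}$; $\|\Box\varphi\|=\{w\mid\forall v,u\,(w\preceq v,\ vRu\Rightarrow u\in\|\varphi\|)\}$; $\|\Diamond\varphi\|=\{w\mid\forall v\succeq w\,\exists u\,(vRu\wedge u\in\|\varphi\|)\}$; $\|\mu X.\varphi\|$, $\|\nu X.\varphi\|$ are the least/greatest fixed points of $A\mapsto\|\varphi\|^{M[X\mapsto A]}$ where $M[X\mapsto A]$ sets $V(X):=A$. $\mathsf{CK}\models\varphi$ means $M,w\models\varphi$ for all $\mathsf{CK}$-models $M$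 and worlds $w$. Proof system $\mathsf{lab}\mu\mathsf{CK}_\omega$. Fix a set of world variables $x,y,z,\dots$ disjoint from $\mathrm{Var}$. A labeled formula is $x:\varphi$. A sequent is $\mathbf R,\Gamma\vdash\Delta$ where $\mathbf R$ is a finite set of atoms $x\preceq y$, $xRy$, and $\Gamma,\Delta$ are finite sets of labeled formulas (commas denote union). Axioms: $\mathbf R,\Gamma,x:\bot\vdash\Delta,x:P$ and $\mathbf R,\Gamma,x:P\vdash\Delta,x:P$ ($P\in\mathrm{Prop}$). Rules (conclusion $\Leftarrow$ premise(s); ''fresh'' = not occurring in the conclusion; in each logical rule the displayed formula of the conclusion is principal and the newly added formulas of the premises are minor; $\preceq$-pres and $\preceq$-trans have no principal/minor formulas): $\preceq$-pres: $\mathbf R,x\preceq y,\Gamma,x:\varphi\vdash\Delta\Leftarrow\mathbf R,x\preceq y,\Gamma,x:\varphi,y:\varphi\vdash\Delta$. $\preceq$-trans: $\mathbf R,x\preceq y,y\preceq z,\Gamma\vdash\Delta\Leftarrow\mathbf R,x\preceq y,y\preceq z,x\preceq z,\Gamma\vdash\Delta$. $\land$l: $\Gamma,x:\varphi\land\psi\vdash\Delta\Leftarrow\Gamma,x:\varphi\land\psi,x:\varphi,x:\psi\vdash\Delta$. $\land$r: $\Gamma\vdash\Delta,x:\varphi\land\psi\Leftarrow$ both $\Gamma\vdash\Delta,x:\varphi\land\psi,x:\varphi$ and $\Gamma\vdash\Delta,x:\varphi\land\psi,x:\psi$. $\lor$l: $\Gamma,x:\varphi\lor\psi\vdash\Delta\Leftarrow$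 both $\Gamma,x:\varphi\lor\psi,x:\varphi\vdash\Delta$ and $\Gamma,x:\varphi\lor\psi,x:\psi\vdash\Delta$. $\lor$r: $\Gamma\vdash\Delta,x:\varphi\lor\psi\Leftarrow\Gamma\vdash\Delta,x:\varphi\lor\psi,x:\varphi,x:\psi$. $\to$l: $\Gamma,x:\varphi\to\psi\vdash\Delta\Leftarrow$ both $\Gamma,x:\varphi\to\psi\vdash\Delta,x:\varphi$ and $\Gamma,x:\varphi\to\psi,x:\psi\vdash\Delta$. $\to$r: $\mathbf R,\Gamma\vdash\Delta,x:\varphi\to\psi\Leftarrow\mathbf R,x\preceq y,\Gamma,y:\varphi\vdash\Delta,x:\varphi\to\psi,y:\psi$ ($y$ fresh). $\Box$l: $\mathbf R,\Gamma,x:\Box\varphi\vdash\Delta\Leftarrow\mathbf R,\Gamma,x:\Box\varphi,\{y:\varphi\mid xRy\in\mathbf R\}\vdash\Delta$. $\Box$r: $\mathbf R,\Gamma\vdash\Delta,x:\Box\varphi\Leftarrow\mathbf R,x\preceq y,yRz,\Gamma\vdash\Delta,x:\Box\varphi,z:\varphi$ ($y,z$ fresh). $\Diamond$l: $\mathbf R,\Gamma,x:\Diamond\varphi\vdash\Delta\Leftarrow\mathbf R,xRy,\Gamma,x:\Diamond\varphi,y:\varphi\vdash\Delta$ ($y$ fresh). $\Diamond$r: $\mathbf R,\Gamma\vdash\Delta,x:\Diamond\varphi\Leftarrow\mathbf R,x\preceq y,\Gamma\vdash\Delta,x:\Diamond\varphi,y:\hat\Diamond\varphi$ ($y$ fresh).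 $\hat\Diamond$r: $\mathbf R,\Gamma\vdash\Delta,x:\hat\Diamond\varphi\Leftarrow\mathbf R,\Gamma\vdash\Delta,x:\hat\Diamond\varphi,\{y:\varphi\mid xRy\in\mathbf R\}$. $\eta$l: $\Gamma,x:\eta X.\varphi_X\vdash\Delta\Leftarrow\Gamma,x:\eta X.\varphi_X,x:\varphi_X\vdash\Delta$; $\eta$r symmetric on the right. regen-l: $\Gamma,x:X\vdash\Delta\Leftarrow\Gamma,x:X,x:\varphi_X\vdash\Delta$; regen-r symmetric on the right. A pre-proof is a (possibly infinite) tree of sequents in which every leaf is an axiom and every inner node together with its children is an instance of a rule (node = conclusion, children = premises). A trace along an infinite branch $(S_i)_{i<\omega}$ is a sequence $(x_i:\varphi_i)_{i<\omega}$ of labeled formulas in the respective sequents such that for each $i$ either $x_{i+1}:\varphi_{i+1}=x_i:\varphi_i$, or $x_i:\varphi_i$ is the principal formula of the rule applied at $S_i$ and $x_{i+1}:\varphi_{i+1}$ is a minor formula of it in $S_{i+1}$. $\eta X.\varphi_X$ is left- (resp. right-) regenerated infinitely often in the trace if infinitely many steps are applications of regen-l (resp. regen-r) with principal formula $x_i:X$ on the left (resp. right) followed in the trace by its minor formula. A trace is progressing if, for the outermost infinitely often regenerated fixed-point formula $\eta X.\varphi_X$ (every other infinitely often regenerated one is its subformula), either $\eta=\nu$ and it is right-regenerated infinitely often, or $\eta=\mu$ and it is left-regenerated infinitely often. A $\mathsf{lab}\mu\mathsf{CK}_\omega$-proof is a pre-proof every infinite branch of which carries a progressing trace. $\mathsf{lab}\mu\mathsf{CK}_\omega\vdash\varphi$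 means there is a world variable $x$ and a proof whose root is $\vdash x:\varphi$ (with $\mathbf R$ and $\Gamma$ empty). *)

(* Defs.v *)
From Stdlib Require Import List Arith.
Import ListNotations.

Inductive eta := Mu | Nu.

(* propositions and propositional variables are both indexed by nat, but live in
   different constructors (disjoint sets).  FLDia is the auxiliary local diamond. *)
Inductive form : Type :=
| FProp (P : nat)
| FVar (X : nat)
| FBot
| FAnd (a b : form)
| FOr (a b : form)
| FImp (a b : form)
| FBox (a : form)
| FDia (a : form)
| FLDia (a : form)
| FFix (e : eta) (X : nat) (a : form).

Fixpoint pos (X : nat) (f : form) {struct f} : Prop :=
  match f with
  | FProp _ | FBot | FVar _ => True
  | FAnd a b | FOr a b => pos X a /\ pos X b
  | FImp a b => neg X a /\ pos X b
  | FBox a | FDia a | FLDia a => pos X a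
  | FFix _ Y a => Y = X \/ pos X a
  end
with neg (X : nat) (f : form) {struct f} : Prop :=
  match f with
  | FProp _ | FBot => True
  | FVar Y => Y <> X
  | FAnd a b | FOr a b => neg X a /\ neg X b
  | FImp a b => pos X a /\ neg X b
  | FBox a | FDia a | FLDia a => neg X a
  | FFix _ Y a => Y = X \/ neg X a
  end.

Fixpoint mu_form (f : form) : Prop :=
  match f with
  | FProp _ | FBot | FVar _ => True
  | FAnd a b | FOr a b | FImp a b => mu_form a /\ mu_form b
  | FBox a | FDia a => mu_form a
  | FLDia _ => False
  | FFix _ X a => pos X a /\ mu_form a
  end.

Fixpoint subform (g f : form) : Prop :=
  g = f \/
  match f with
  | FAnd a b | FOr a b | FImp a b => subform g a \/ subform g b
  | FBox a | FDia a | FLDia a => subform g a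
  | FFix _ _ a => subform g a
  | _ => False
  end.

Fixpoint occurs_free (X : nat) (f : form) : Prop :=
  match f with
  | FProp _ | FBot => False
  | FVar Y => Y = X
  | FAnd a b | FOr a b | FImp a b => occurs_free X a \/ occurs_free X b
  | FBox a | FDia a | FLDia a => occurs_free X a
  | FFix _ Y a => Y <> X /\ occurs_free X a
  end.

Definition sentence (f : form) : Prop := forall X, ~ occurs_free X f.

Fixpoint guarded_occ (X : nat) (f : form) : Prop :=
  match f with
  | FProp _ | FBot => True
  | FVar Y => Y <> X
  | FAnd a b | FOr a b | FImp a b => guarded_occ X a /\ guarded_occ X b
  | FBox _ | FDia _ | FLDia _ => True
  | FFix _ _ a => guarded_occ X a
  end.

Definition guarded (f : form) : Prop :=
  forall e X b, subform (FFix e X b) f -> guarded_occ X b.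

Fixpoint count_binders (X : nat) (f : form) : nat :=
  match f with
  | FProp _ | FBot | FVar _ => 0
  | FAnd a b | FOr a b | FImp a b => count_binders X a + count_binders X b
  | FBox a | FDia a | FLDia a => count_binders X a
  | FFix _ Y a => (if Nat.eqb Y X then 1 else 0) + count_binders X a
  end.

Definition well_bounded (f : form) : Prop := forall X, count_binders X f <= 1.

Definition well_named (f : form) : Prop := guarded f /\ well_bounded f.

(* eta X . b is the (unique, for well-named phi0) binder of X in phi0; b = phi0_X *)
Definition binds (phi0 : form) (X : nat) (e : eta) (b : form) : Prop :=
  subform (FFix e X b) phi0.

Record CKModel := {
  W : Type;
  W_inh : inhabited W;
  Wbot : W -> Prop;
  wle : W -> W -> Prop;
  wR : W -> W -> Prop;
  V : nat -> W -> Prop;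
  wle_refl : forall w, wle w w;
  wle_trans : forall u v w, wle u v -> wle v w -> wle u w;
  V_mono : forall P w v, wle w v -> V P w -> V P v;
  Wbot_V : forall P w, Wbot w -> V P w;
  Wbot_le : forall w v, wle w v -> Wbot w -> Wbot v;
  Wbot_R : forall w v, wR w v -> Wbot w -> Wbot v
}.

Definition upd {T : Type} (rho : nat -> T -> Prop) (X : nat) (A : T -> Prop) :
  nat -> T -> Prop := fun Y => if Nat.eqb Y X then A else rho Y.

(* least fixed point = intersection of prefixed points,
   greatest fixed point = union of postfixed points (Knaster-Tarski) *)
Fixpoint sem (M : CKModel) (rho : nat -> W M -> Prop) (f : form) {struct f} : W M -> Prop :=
  match f with
  | FProp P => V M P
  | FVar X => rho X
  | FBot => Wbot M
  | FAnd a b => fun w => sem M rho a w /\ sem M rho b w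
  | FOr a b => fun w => sem M rho a w \/ sem M rho b w
  | FImp a b => fun w => forall v, wle M w v -> sem M rho a v -> sem M rho b v
  | FBox a => fun w => forall v u, wle M w v -> wR M v u -> sem M rho a u
  | FDia a => fun w => forall v, wle M w v -> exists u, wR M v u /\ sem M rho a u
  | FLDia a => fun w => exists v, wR M w v /\ sem M rho a v
  | FFix Mu X a => fun w =>
      forall A : W M -> Prop, (forall u, sem M (upd rho X A) a u -> A u) -> A w
  | FFix Nu X a => fun w =>
      exists A : W M -> Prop, (forall u, A u -> sem M (upd rho X A) a u) /\ A w
  end.

(* M, w |= phi for a sentence phi (the valuation of variables is irrelevant) *)
Definition sat (M : CKModel) (w : W M) (f : form) : Prop :=
  sem M (fun _ _ => False) f w.

Inductive atom := ALe (x y : nat) | ARel (x y : nat).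
Definition lform : Type := (nat * form)%type.
Record sequent := mkSeq { atoms : list atom; lhs : list lform; rhs : list lform }.
(* sequent components are finite SETS, represented by lists up to membership *)

Inductive side := SL | SR.
Definition sform : Type := (side * nat * form)%type.

Definition extends {T : Type} (A B : list T) (P : T -> Prop) : Prop :=
  forall a, In a B <-> (In a A \/ P a).
Definition same {T : Type} (A B : list T) : Prop := extends A B (fun _ => False).

Definition occurs_label (y : nat) (c : sequent) : Prop :=
  (exists z, In (ALe y z) (atoms c) \/ In (ALe z y) (atoms c)
          \/ In (ARel y z) (atoms c) \/ In (ARel z y) (atoms c))
  \/ (exists f, In (y, f) (lhs c) \/ In (y, f) (rhs c)).
Definition fresh (y : nat) (c : sequent) : Prop := ~ occurs_label y c.

Definition axiom (c : sequent) : Prop :=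
  exists x P, (In (x, FBot) (lhs c) \/ In (x, FProp P) (lhs c)) /\ In (x, FProp P) (rhs c).

(* rule phi0 c ps pr ms : c is the conclusion, ps the premises, pr the principal
   formula (if any) and ms the list (aligned with ps) of minor formulas. *)
Inductive rule (phi0 : form) : sequent -> list sequent -> option sform -> list (sform -> Prop) -> Prop :=
| r_pres c p x y a :
    In (ALe x y) (atoms c) -> In (x, a) (lhs c) ->
    same (atoms c) (atoms p) -> extends (lhs c) (lhs p) (fun l => l = (y, a)) ->
    same (rhs c) (rhs p) ->
    rule phi0 c [p] None [fun _ => False]
| r_trans c p x y z :
    In (ALe x y) (atoms c) -> In (ALe y z) (atoms c) ->
    extends (atoms c) (atoms p) (fun t => t = ALe x z) ->
    same (lhs c) (lhs p) -> same (rhs c) (rhs p) ->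
    rule phi0 c [p] None [fun _ => False]
| r_andL c p x a b :
    In (x, FAnd a b) (lhs c) ->
    same (atoms c) (atoms p) ->
    extends (lhs c) (lhs p) (fun l => l = (x, a) \/ l = (x, b)) ->
    same (rhs c) (rhs p) ->
    rule phi0 c [p] (Some (SL, x, FAnd a b))
      [fun s => s = (SL, x, a) \/ s = (SL, x, b)]
| r_andR c p1 p2 x a b :
    In (x, FAnd a b) (rhs c) ->
    same (atoms c) (atoms p1) -> same (lhs c) (lhs p1) ->
    extends (rhs c) (rhs p1) (fun l => l = (x, a)) ->
    same (atoms c) (atoms p2) -> same (lhs c) (lhs p2) ->
    extends (rhs c) (rhs p2) (fun l => l = (x, b)) ->
    rule phi0 c [p1; p2] (Some (SR, x, FAnd a b))
      [fun s => s = (SR, x, a); fun s => s = (SR, x, b)]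
| r_orL c p1 p2 x a b :
    In (x, FOr a b) (lhs c) ->
    same (atoms c) (atoms p1) -> extends (lhs c) (lhs p1) (fun l => l = (x, a)) ->
    same (rhs c) (rhs p1) ->
    same (atoms c) (atoms p2) -> extends (lhs c) (lhs p2) (fun l => l = (x, b)) ->
    same (rhs c) (rhs p2) ->
    rule phi0 c [p1; p2] (Some (SL, x, FOr a b))
      [fun s => s = (SL, x, a); fun s => s = (SL, x, b)]
| r_orR c p x a b :
    In (x, FOr a b) (rhs c) ->
    same (atoms c) (atoms p) -> same (lhs c) (lhs p) ->
    extends (rhs c) (rhs p) (fun l => l = (x, a) \/ l = (x, b)) ->
    rule phi0 c [p] (Some (SR, x, FOr a b))
      [fun s => s = (SR, x, a) \/ s = (SR, x, b)]
| r_impL c p1 p2 x a b :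
    In (x, FImp a b) (lhs c) ->
    same (atoms c) (atoms p1) -> same (lhs c) (lhs p1) ->
    extends (rhs c) (rhs p1) (fun l => l = (x, a)) ->
    same (atoms c) (atoms p2) -> extends (lhs c) (lhs p2) (fun l => l = (x, b)) ->
    same (rhs c) (rhs p2) ->
    rule phi0 c [p1; p2] (Some (SL, x, FImp a b))
      [fun s => s = (SR, x, a); fun s => s = (SL, x, b)]
| r_impR c p x y a b :
    In (x, FImp a b) (rhs c) -> fresh y c ->
    extends (atoms c) (atoms p) (fun t => t = ALe x y) ->
    extends (lhs c) (lhs p) (fun l => l = (y, a)) ->
    extends (rhs c) (rhs p) (fun l => l = (y, b)) ->
    rule phi0 c [p] (Some (SR, x, FImp a b))
      [fun s => s = (SL, y, a) \/ s = (SR, y, b)]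
| r_boxL c p x a :
    In (x, FBox a) (lhs c) ->
    same (atoms c) (atoms p) ->
    extends (lhs c) (lhs p) (fun l => exists y, l = (y, a) /\ In (ARel x y) (atoms c)) ->
    same (rhs c) (rhs p) ->
    rule phi0 c [p] (Some (SL, x, FBox a))
      [fun s => exists y, s = (SL, y, a) /\ In (ARel x y) (atoms c)]
| r_boxR c p x y z a :
    In (x, FBox a) (rhs c) -> fresh y c -> fresh z c -> y <> z ->
    extends (atoms c) (atoms p) (fun t => t = ALe x y \/ t = ARel y z) ->
    same (lhs c) (lhs p) ->
    extends (rhs c) (rhs p) (fun l => l = (z, a)) ->
    rule phi0 c [p] (Some (SR, x, FBox a)) [fun s => s = (SR, z, a)]
| r_diaL c p x y a :
    In (x, FDia a) (lhs c) -> fresh y c ->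
    extends (atoms c) (atoms p) (fun t => t = ARel x y) ->
    extends (lhs c) (lhs p) (fun l => l = (y, a)) ->
    same (rhs c) (rhs p) ->
    rule phi0 c [p] (Some (SL, x, FDia a)) [fun s => s = (SL, y, a)]
| r_diaR c p x y a :
    In (x, FDia a) (rhs c) -> fresh y c ->
    extends (atoms c) (atoms p) (fun t => t = ALe x y) ->
    same (lhs c) (lhs p) ->
    extends (rhs c) (rhs p) (fun l => l = (y, FLDia a)) ->
    rule phi0 c [p] (Some (SR, x, FDia a)) [fun s => s = (SR, y, FLDia a)]
| r_ldiaR c p x a :
    In (x, FLDia a) (rhs c) ->
    same (atoms c) (atoms p) -> same (lhs c) (lhs p) ->
    extends (rhs c) (rhs p) (fun l => exists y, l = (y, a) /\ In (ARel x y) (atoms c)) ->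
    rule phi0 c [p] (Some (SR, x, FLDia a))
      [fun s => exists y, s = (SR, y, a) /\ In (ARel x y) (atoms c)]
| r_fixL c p x e X b :
    binds phi0 X e b -> In (x, FFix e X b) (lhs c) ->
    same (atoms c) (atoms p) -> extends (lhs c) (lhs p) (fun l => l = (x, b)) ->
    same (rhs c) (rhs p) ->
    rule phi0 c [p] (Some (SL, x, FFix e X b)) [fun s => s = (SL, x, b)]
| r_fixR c p x e X b :
    binds phi0 X e b -> In (x, FFix e X b) (rhs c) ->
    same (atoms c) (atoms p) -> same (lhs c) (lhs p) ->
    extends (rhs c) (rhs p) (fun l => l = (x, b)) ->
    rule phi0 c [p] (Some (SR, x, FFix e X b)) [fun s => s = (SR, x, b)]
| r_regenL c p x e X b :
    binds phi0 X e b -> In (x, FVar X) (lhs c) ->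
    same (atoms c) (atoms p) -> extends (lhs c) (lhs p) (fun l => l = (x, b)) ->
    same (rhs c) (rhs p) ->
    rule phi0 c [p] (Some (SL, x, FVar X)) [fun s => s = (SL, x, b)]
| r_regenR c p x e X b :
    binds phi0 X e b -> In (x, FVar X) (rhs c) ->
    same (atoms c) (atoms p) -> same (lhs c) (lhs p) ->
    extends (rhs c) (rhs p) (fun l => l = (x, b)) ->
    rule phi0 c [p] (Some (SR, x, FVar X)) [fun s => s = (SR, x, b)].

(* nodes are addresses (lists of child indices); each node carries its sequent
   and, for inner nodes, the rule instance applied (principal / minor formulas). *)
Record PreProof (phi0 : form) := {
  node : list nat -> Prop;
  seqt : list nat -> sequent;
  nchild : list nat -> nat;
  princ : list nat -> option sform;
  minors : list nat -> list (sform -> Prop);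
  node_root : node [];
  node_child : forall a i, node a -> (node (a ++ [i]) <-> i < nchild a);
  node_parent : forall a i, node (a ++ [i]) -> node a;
  node_step : forall a, node a ->
     (nchild a = 0 /\ axiom (seqt a)) \/
     (0 < nchild a /\
      rule phi0 (seqt a) (map (fun i => seqt (a ++ [i])) (seq 0 (nchild a)))
           (princ a) (minors a))
}.
Arguments node {phi0}. Arguments seqt {phi0}. Arguments nchild {phi0}.
Arguments princ {phi0}. Arguments minors {phi0}.

Definition root_is {phi0} (P : PreProof phi0) (x : nat) (phi : form) : Prop :=
  same (atoms (seqt P [])) [] /\ same (lhs (seqt P [])) [] /\
  same (rhs (seqt P [])) [(x, phi)].

Definition branch (f : nat -> nat) (n : nat) : list nat := map f (seq 0 n).
Definition is_branch {phi0} (P : PreProof phi0) (f : nat -> nat) : Prop :=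
  forall n, node P (branch f n).

Definition in_sequent (c : sequent) (s : sform) : Prop :=
  match s with
  | (SL, x, g) => In (x, g) (lhs c)
  | (SR, x, g) => In (x, g) (rhs c)
  end.

Definition minor_at {phi0} (P : PreProof phi0) (f : nat -> nat) (i : nat) (s' : sform) : Prop :=
  nth (f i) (minors P (branch f i)) (fun _ => False) s'.

Definition is_trace {phi0} (P : PreProof phi0) (f : nat -> nat) (t : nat -> sform) : Prop :=
  (forall i, in_sequent (seqt P (branch f i)) (t i)) /\
  (forall i, t (S i) = t i \/
             (princ P (branch f i) = Some (t i) /\ minor_at P f i (t (S i)))).

Definition regen_at {phi0} (P : PreProof phi0) (f : nat -> nat) (t : nat -> sform)
  (s : side) (X : nat) (i : nat) : Prop :=
  exists x, t i = (s, x, FVar X) /\ princ P (branch f i) = Some (t i) /\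
            minor_at P f i (t (S i)).

Definition inf_often (Q : nat -> Prop) : Prop := forall n, exists i, n <= i /\ Q i.

Definition regen_inf {phi0} (P : PreProof phi0) f t (s : side) (X : nat) : Prop :=
  inf_often (regen_at P f t s X).
Definition any_regen_inf {phi0} (P : PreProof phi0) f t (X : nat) : Prop :=
  regen_inf P f t SL X \/ regen_inf P f t SR X.

Definition progressing {phi0} (P : PreProof phi0) f t : Prop :=
  exists X e b, binds phi0 X e b /\ any_regen_inf P f t X /\
    (forall Y e' b', binds phi0 Y e' b' -> any_regen_inf P f t Y ->
        subform (FFix e' Y b') (FFix e X b)) /\
    ((e = Nu /\ regen_inf P f t SR X) \/ (e = Mu /\ regen_inf P f t SL X)).

Definition is_proof {phi0} (P : PreProof phi0) : Prop :=
  forall f, is_branch P f -> exists t, is_trace P f t /\ progressing P f t.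

(* Main.v *)
From Stdlib Require Import List Arith Lia Classical FunctionalExtensionality PropExtensionality ClassicalEpsilon.
Require Import Defs.

Module TowA.
Import ListNotations.

Section Tower.
Variable T : Type.
Variable op : (T -> Prop) -> (T -> Prop).
Definition ssub (A B : T -> Prop) := forall w, A w -> B w.
Hypothesis op_mono : forall A B, ssub A B -> ssub (op A) (op B).

Lemma set_ext (A B : T -> Prop) : ssub A B -> ssub B A -> A = B.
Proof. intros H1 H2. apply functional_extensionality; intro w.
  apply propositional_extensionality; split; auto. Qed.

Inductive LT : (T -> Prop) -> Prop :=
| LTi : forall S : (T -> Prop) -> Prop, (forall A, S A -> LT A) ->
        LT (fun w => exists A, S A /\ op A w).

Lemma LT_infl : forall D, LT D -> ssub D (op D).
Proof.
  intros D H; induction H as [S HS IH].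
  intros w [A [HA Hw]]. eapply op_mono; [|exact Hw].
  intros u Hu. exists A; split; auto. apply IH; auto.
Qed.

Lemma LT_elem_sub : forall S A, S A -> LT A -> ssub A (fun w => exists A, S A /\ op A w).
Proof. intros S A HSA HA w Hw. exists A; split; auto. apply LT_infl; auto. Qed.

Lemma LT_empty : LT (fun _ => False).
Proof.
  replace (fun _ : T => False) with (fun w => exists A, (fun _ : T -> Prop => False) A /\ op A w).
  - constructor. intros A [].
  - apply set_ext; intros w H; [destruct H as [A [[] _]] | destruct H].
Qed.

Definition sstrict (B D : T -> Prop) := ssub B D /\ ~ ssub D B.

Lemma LT_decomp : forall D, LT D -> forall w, D w ->
  exists B, LT B /\ sstrict B D /\ op B w.
Proof.
  intros D H; induction H as [S HS IH]. intros w [A [HA Hw]].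
  destruct (classic (ssub (fun w => exists A, S A /\ op A w) A)) as [Hc|Hc].
  - assert (HwA : A w) by (apply Hc; exists A; auto).
    destruct (IH A HA w HwA) as [B [HB [[H1 H2] H3]]].
    exists B; split; auto; split; auto. split.
    + intros u Hu. apply LT_elem_sub with (A:=A); auto.
    + intro Hs. apply H2. intros u Hu. apply Hs. apply LT_elem_sub with (A:=A); auto.
  - exists A; split; auto. split; auto. split; auto.
    apply LT_elem_sub; auto.
Qed.

Lemma LT_tot_strong : forall A, LT A -> forall B, LT B -> ssub B A \/ ssub (op A) B.
Proof.
  intros A HA; induction HA as [SA HSA IH]. intros B HB.
  destruct HB as [SB HSB].
  destruct (classic (exists C, SB C /\ ssub (fun w => exists A, SA A /\ op A w) C)) as [[C [HC Hs]]|Hn].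
  - right. intros w Hw. exists C; split; auto. eapply op_mono; eauto.
  - left. intros w [C [HC Hw]].
    destruct (classic (exists D, SA D /\ ssub C D)) as [[D [HD HCD]]|Hn2].
    + exists D; split; auto. eapply op_mono; eauto.
    + exfalso. apply Hn. exists C; split; auto.
      intros u [D [HD Hu]].
      destruct (IH D HD C (HSB C HC)) as [H1|H2].
      * exfalso. apply Hn2. exists D; auto.
      * apply H2; auto.
Qed.

Lemma LT_tot : forall A B, LT A -> LT B -> ssub A B \/ ssub B A.
Proof.
  intros A B HA HB. destruct (LT_tot_strong A HA B HB) as [H|H]; auto.
  left. intros w Hw. apply H. apply LT_infl; auto.
Qed.

Definition LTR (B A : T -> Prop) := LT B /\ sstrict B A.

Lemma LT_acc : forall A, LT A -> Acc LTR A.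
Proof.
  intros A HA; induction HA as [S HS IH]. constructor.
  intros B [HB [HBA HnAB]].
  destruct (classic (exists D, S D /\ ssub B D)) as [[D [HD HBD]]|Hn].
  - destruct (classic (ssub D B)) as [HDB|HnDB].
    + constructor. intros C [HC [HCB HnBC]]. apply Acc_inv with (x := D); auto.
      split; auto. split.
      * intros u Hu; apply HBD, HCB, Hu.
      * intro Hs. apply HnBC. intros u Hu. apply Hs, HBD, Hu.
    + apply Acc_inv with (x := D); auto. split; auto. split; auto.
  - exfalso. apply HnAB. intros w [D [HD Hw]].
    destruct (LT_tot_strong D (HS D HD) B HB) as [H1|H2].
    + exfalso; apply Hn; exists D; auto.
    + apply H2; auto.
Qed.

Definition Ltop := fun w => exists A, LT A /\ op A w.
Lemma LT_top : LT Ltop.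
Proof. unfold Ltop. constructor. auto. Qed.
Lemma Ltop_prefixed : ssub (op Ltop) Ltop.
Proof. intros w Hw. exists Ltop; split; auto. apply LT_top. Qed.

Lemma lfp_LT : forall w, (forall A : T -> Prop, (forall u, op A u -> A u) -> A w) ->
  exists D, LT D /\ op D w.
Proof. intros w H. apply (H Ltop Ltop_prefixed). Qed.

Variable le : T -> T -> Prop.
Definition upclosed (A : T -> Prop) := forall u v, le u v -> A u -> A v.
Lemma LT_up : (forall A, upclosed A -> upclosed (op A)) -> forall D, LT D -> upclosed D.
Proof.
  intros Hop D H; induction H as [S HS IH].
  intros u v Huv [A [HA Hu]]. exists A; split; auto. eapply Hop; eauto.
Qed.
End Tower.

Arguments ssub {T}. Arguments sstrict {T}. Arguments upclosed {T}.

End TowA.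
Import TowA.
Module TowB.
Import ListNotations.

Section UTower.
Variable T : Type.
Variable op : (T -> Prop) -> (T -> Prop).
Hypothesis op_mono : forall A B, ssub A B -> ssub (op A) (op B).

Definition opc (A : T -> Prop) : T -> Prop := fun w => ~ op (fun u => ~ A u) w.
Lemma opc_mono : forall A B, ssub A B -> ssub (opc A) (opc B).
Proof.
  intros A B H w Hw Hc. apply Hw. eapply op_mono; [|exact Hc].
  intros u Hu Hu'. apply Hu, H, Hu'.
Qed.

Definition UT (U : T -> Prop) := exists D, LT T opc D /\ U = (fun w => ~ D w).

Lemma UT_full : UT (fun _ => True).
Proof.
  exists (fun _ => False); split. apply LT_empty.
  apply set_ext; intros w H; auto.
Qed.

Lemma UT_decomp : forall U, UT U -> forall w, ~ U w ->
  exists U', UT U' /\ sstrict U U' /\ ~ op U' w.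
Proof.
  intros U [D [HD ->]] w Hw. apply NNPP in Hw.
  destruct (LT_decomp T opc opc_mono D HD w Hw) as [B [HB [[H1 H2] H3]]].
  exists (fun u => ~ B u). split; [exists B; auto|]. split; [split|].
  - intros u Hu Hb. apply Hu, H1, Hb.
  - intro Hs. apply H2. intros u Hu. apply NNPP. intro Hb. exact (Hs u Hb Hu).
  - exact H3.
Qed.

Lemma UT_tot : forall U1 U2, UT U1 -> UT U2 -> ssub U1 U2 \/ ssub U2 U1.
Proof.
  intros U1 U2 [D1 [H1 ->]] [D2 [H2 ->]].
  destruct (LT_tot T opc opc_mono D1 D2 H1 H2) as [H|H]; [right|left];
  intros u Hu Hd; apply Hu, H, Hd.
Qed.

Definition UTR (U' U : T -> Prop) := UT U' /\ sstrict U U'.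

Lemma UT_acc : forall U, UT U -> Acc UTR U.
Proof.
  intros U [D [HD ->]]. pose proof (LT_acc T opc opc_mono D HD) as Hacc.
  clear HD. induction Hacc as [D _ IH]. constructor.
  intros U' [[D' [HD' ->]] [H1 H2]]. apply IH. split; auto. split.
  - intros u Hu. apply NNPP. intro Hn. exact (H1 u Hn Hu).
  - intro Hs. apply H2. intros u Hu Hd. apply Hu, Hs, Hd.
Qed.

Lemma gfp_UT : forall w, ~ (exists A : T -> Prop, (forall u, A u -> op A u) /\ A w) ->
  exists U, UT U /\ ~ op U w.
Proof.
  intros w H.
  assert (Hw : Ltop T opc w).
  { apply NNPP. intro Hn. apply H. exists (fun u => ~ Ltop T opc u). split; auto.
    intros u Hu. apply NNPP. intro Hc. apply Hu. apply Ltop_prefixed. apply Hc. }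
  destruct Hw as [A [HA HAw]]. exists (fun u => ~ A u). split; [exists A; auto|]. exact HAw.
Qed.

Variable le : T -> T -> Prop.
Lemma UT_up : (forall A, upclosed le A -> upclosed le (op A)) -> forall U, UT U -> upclosed le U.
Proof.
  intros Hop U [D [HD ->]].
  assert (Hd : upclosed (fun u v => le v u) D).
  { apply (LT_up T opc (fun u v => le v u)); auto.
    intros A HA u v Huv Hu Hc. apply Hu.
    assert (Hup : upclosed le (fun u => ~ A u)).
    { intros a b Hab Ha Hb. apply Ha. eapply HA; eauto. }
    apply (Hop _ Hup v u Huv Hc). }
  intros u v Huv Hu Hv. apply Hu. eapply Hd; eauto.
Qed.
End UTower.

End TowB.
Import TowB.
Module Syn.
Import ListNotations.
Import ListNotations.

Fixpoint fsize (f : form) : nat :=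
  match f with
  | FProp _ | FBot | FVar _ => 1
  | FAnd a b | FOr a b | FImp a b => S (fsize a + fsize b)
  | FBox a | FDia a | FLDia a => S (fsize a)
  | FFix _ _ a => S (fsize a)
  end.

Lemma subform_refl : forall f, subform f f.
Proof. destruct f; simpl; auto. Qed.

Lemma subform_size : forall f g, subform g f -> fsize g <= fsize f.
Proof.
  induction f; simpl; intros g H; destruct H as [H|H]; subst; simpl; auto;
  try contradiction;
  try (destruct H as [H|H]; [apply IHf1 in H|apply IHf2 in H]; lia);
  try (apply IHf in H; lia).
Qed.

Lemma subform_trans : forall f g h, subform g f -> subform h g -> subform h f.
Proof.
  induction f; simpl; intros g h H1 H2; destruct H1 as [H1|H1]; subst; auto;
  try contradiction;
  try (destruct H1 as [H1|H1]; right; [left; eapply IHf1|right; eapply IHf2]; eauto);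
  try (right; eapply IHf; eauto).
Qed.

Lemma subform_fix_body : forall e X a, subform a (FFix e X a).
Proof. intros; simpl; right; apply subform_refl. Qed.

Lemma subform_not_fix_body : forall e X a, ~ subform (FFix e X a) a.
Proof. intros e X a H; apply subform_size in H; simpl in H; lia. Qed.

Lemma mu_form_sub : forall f g, mu_form f -> subform g f -> mu_form g.
Proof.
  induction f; simpl; intros g Hm H; destruct H as [H|H]; subst; simpl; auto;
  try contradiction; try tauto;
  try (destruct Hm; destruct H as [H|H]; [eapply IHf1|eapply IHf2]; eauto);
  try (eapply IHf; eauto; fail); try (destruct Hm as [_ Hm]; eapply IHf; eauto).
Qed.

Definition entry := (eta * nat * form)%type.
Fixpoint binders (f : form) : list entry :=
  match f with
  | FProp _ | FBot | FVar _ => []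
  | FAnd a b | FOr a b | FImp a b => binders a ++ binders b
  | FBox a | FDia a | FLDia a => binders a
  | FFix e X a => (e, X, a) :: binders a
  end.
Definition ename (en : entry) : nat := let '(_, X, _) := en in X.
Definition names (l : list entry) := map ename l.

Lemma In_binders : forall f e X a, In (e, X, a) (binders f) <-> subform (FFix e X a) f.
Proof.
  induction f; simpl; intros e0 X0 a0; 
  try (rewrite in_app_iff, IHf1, IHf2; split; [intro H; right; exact H| intros [H|H]; [discriminate|exact H]]);
  try (rewrite IHf; split; [intro H; right; exact H| intros [H|H]; [discriminate|exact H]]);
  try (split; [intros []|intros [H|[]]; discriminate]).
  split; intros [H|H].
  - inversion H; subst; left; auto.
  - right; apply IHf; auto.
  - inversion H; subst; left; auto.
  - right; apply IHf; auto.
Qed.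

Lemma count_names : forall f X,
  count_occ Nat.eq_dec (names (binders f)) X = count_binders X f.
Proof.
  induction f; intros X0; simpl; auto;
  try (unfold names in *; rewrite map_app, count_occ_app, IHf1, IHf2; auto).
  unfold names in *; simpl. rewrite IHf.
  destruct (Nat.eq_dec X X0) as [->|Hn].
  - rewrite Nat.eqb_refl; auto.
  - apply Nat.eqb_neq in Hn; rewrite Hn; auto.
Qed.

Lemma wb_nodup : forall f, well_bounded f -> NoDup (names (binders f)).
Proof.
  intros f H. apply (NoDup_count_occ' Nat.eq_dec). intros X HX.
  apply (count_occ_In Nat.eq_dec) in HX.
  rewrite count_names in *. specialize (H X). lia.
Qed.

Lemma nodup_map_inj : forall {A B} (g : A -> B) l x y, NoDup (map g l) ->
  In x l -> In y l -> g x = g y -> x = y.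
Proof.
  induction l; simpl; intros x y Hn Hx Hy Hg; [contradiction|].
  inversion Hn; subst.
  destruct Hx as [->|Hx]; destruct Hy as [->|Hy]; auto.
  - exfalso; apply H1; rewrite Hg; apply in_map; auto.
  - exfalso; apply H1; rewrite <- Hg; apply in_map; auto.
Qed.

Lemma binders_split : forall f e X a, subform (FFix e X a) f ->
  exists L1 L2, binders f = L1 ++ (e, X, a) :: binders a ++ L2.
Proof.
  induction f; simpl; intros e0 X0 a0 H; destruct H as [H|H]; try discriminate;
  try contradiction.
  - destruct H as [H|H].
    + destruct (IHf1 _ _ _ H) as [L1 [L2 E]]. exists L1, (L2 ++ binders f2).
      rewrite E; rewrite <- !app_assoc; simpl; rewrite <- ?app_assoc; reflexivity.
    + destruct (IHf2 _ _ _ H) as [L1 [L2 E]]. exists (binders f1 ++ L1), L2.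
      rewrite E; rewrite <- !app_assoc; simpl; rewrite <- ?app_assoc; reflexivity.
  - destruct H as [H|H].
    + destruct (IHf1 _ _ _ H) as [L1 [L2 E]]. exists L1, (L2 ++ binders f2).
      rewrite E; rewrite <- !app_assoc; simpl; rewrite <- ?app_assoc; reflexivity.
    + destruct (IHf2 _ _ _ H) as [L1 [L2 E]]. exists (binders f1 ++ L1), L2.
      rewrite E; rewrite <- !app_assoc; simpl; rewrite <- ?app_assoc; reflexivity.
  - destruct H as [H|H].
    + destruct (IHf1 _ _ _ H) as [L1 [L2 E]]. exists L1, (L2 ++ binders f2).
      rewrite E; rewrite <- !app_assoc; simpl; rewrite <- ?app_assoc; reflexivity.
    + destruct (IHf2 _ _ _ H) as [L1 [L2 E]]. exists (binders f1 ++ L1), L2.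
      rewrite E; rewrite <- !app_assoc; simpl; rewrite <- ?app_assoc; reflexivity.
  - apply IHf; auto.
  - apply IHf; auto.
  - apply IHf; auto.
  - inversion H; subst. exists [], []. rewrite app_nil_r; auto.
  - destruct (IHf _ _ _ H) as [L1 [L2 E]]. exists ((e, X, f) :: L1), L2. rewrite E; auto.
Qed.

Lemma free_sub : forall f g Y, subform g f -> occurs_free Y g ->
  occurs_free Y f \/ exists e b, subform (FFix e Y b) f /\ subform g b.
Proof.
  induction f; simpl; intros g Y0 H Hf; destruct H as [H|H]; subst; auto; try contradiction.
  - destruct H as [H|H]; [destruct (IHf1 _ _ H Hf)|destruct (IHf2 _ _ H Hf)]; auto;
    destruct H0 as [e [b [H1 H2]]]; right; exists e, b; auto.
  - destruct H as [H|H]; [destruct (IHf1 _ _ H Hf)|destruct (IHf2 _ _ H Hf)]; auto;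
    destruct H0 as [e [b [H1 H2]]]; right; exists e, b; auto.
  - destruct H as [H|H]; [destruct (IHf1 _ _ H Hf)|destruct (IHf2 _ _ H Hf)]; auto;
    destruct H0 as [e [b [H1 H2]]]; right; exists e, b; auto.
  - destruct (IHf _ _ H Hf); auto. destruct H0 as [e [b [H1 H2]]]; right; exists e, b; auto.
  - destruct (IHf _ _ H Hf); auto. destruct H0 as [e [b [H1 H2]]]; right; exists e, b; auto.
  - destruct (IHf _ _ H Hf); auto. destruct H0 as [e0 [b [H1 H2]]]; right; exists e0, b; auto.
  - destruct (IHf _ _ H Hf) as [H0|H0].
    + destruct (Nat.eq_dec X Y0) as [->|Hn].
      * right. exists e, f. split; [left; auto|auto].
      * left; auto.
    + destruct H0 as [e0 [b [H1 H2]]]; right; exists e0, b; auto.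
Qed.

End Syn.
Import Syn.
Module Syn2.
Import ListNotations.
Import ListNotations.

Definition flip (s : side) := match s with SL => SR | SR => SL end.

Fixpoint okside (sd : nat -> side) (s : side) (g : form) : Prop :=
  match g with
  | FVar Y => sd Y = s
  | FProp _ | FBot => True
  | FAnd a b | FOr a b => okside sd s a /\ okside sd s b
  | FImp a b => okside sd (flip s) a /\ okside sd s b
  | FBox a | FDia a | FLDia a => okside sd s a
  | FFix _ Y a => sd Y = s /\ okside sd s a
  end.

Fixpoint bside (s : side) (g : form) (Y : nat) : option side :=
  match g with
  | FFix _ Z a => if Nat.eqb Z Y then Some s else bside s a Y
  | FAnd a b | FOr a b =>
      match bside s a Y with Some r => Some r | None => bside s b Y end
  | FImp a b =>
      match bside (flip s) a Y with Some r => Some r | None => bside s b Y end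
  | FBox a | FDia a | FLDia a => bside s a Y
  | _ => None
  end.

Lemma bside_count : forall g s Y, bside s g Y <> None -> count_binders Y g >= 1.
Proof.
  induction g; simpl; intros s Y0 H; try congruence;
  try (destruct (bside _ g1 Y0) eqn:E;
       [assert (count_binders Y0 g1 >= 1) by (eapply IHg1; rewrite E; congruence); lia
       |assert (count_binders Y0 g2 >= 1) by (eapply IHg2; eauto); lia]);
  try (eapply IHg; eauto).
  destruct (Nat.eqb X Y0); [lia|]. assert (count_binders Y0 g >= 1) by (eapply IHg; eauto); lia.
Qed.

Lemma okside_gen : forall sd g s,
  mu_form g -> (forall X, count_binders X g <= 1) ->
  (forall Z r, bside s g Z = Some r -> sd Z = r) ->
  (forall Y, occurs_free Y g -> (sd Y = s -> pos Y g) /\ (sd Y <> s -> neg Y g)) ->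
  okside sd s g.
Proof.
  intros sd; induction g; simpl; intros s Hmu Hcb Hb Hf; auto.
  - destruct (Hf X eq_refl) as [_ H2]. destruct (sd X), s; auto; exfalso; apply (H2 ltac:(discriminate)); auto.
  - destruct Hmu. split.
    + apply IHg1; auto. intro X; specialize (Hcb X); lia.
      intros Z r E. apply Hb. rewrite E; auto.
      intros Y HY. destruct (Hf Y (or_introl HY)); split; intros; try tauto.
    + apply IHg2; auto. intro X; specialize (Hcb X); lia.
      intros Z r E. apply Hb. destruct (bside s g1 Z) eqn:E1; auto.
      exfalso. assert (count_binders Z g1 >= 1) by (eapply bside_count; rewrite E1; congruence).
      assert (count_binders Z g2 >= 1) by (eapply bside_count; rewrite E; congruence).
      specialize (Hcb Z); lia.
      intros Y HY. destruct (Hf Y (or_intror HY)); split; intros; try tauto.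
  - destruct Hmu. split.
    + apply IHg1; auto. intro X; specialize (Hcb X); lia.
      intros Z r E. apply Hb. rewrite E; auto.
      intros Y HY. destruct (Hf Y (or_introl HY)); split; intros; try tauto.
    + apply IHg2; auto. intro X; specialize (Hcb X); lia.
      intros Z r E. apply Hb. destruct (bside s g1 Z) eqn:E1; auto.
      exfalso. assert (count_binders Z g1 >= 1) by (eapply bside_count; rewrite E1; congruence).
      assert (count_binders Z g2 >= 1) by (eapply bside_count; rewrite E; congruence).
      specialize (Hcb Z); lia.
      intros Y HY. destruct (Hf Y (or_intror HY)); split; intros; try tauto.
  - destruct Hmu. split.
    + apply IHg1; auto. intro X; specialize (Hcb X); lia.
      intros Z r E. apply Hb. rewrite E; auto.
      intros Y HY. destruct (Hf Y (or_introl HY)); split; intros.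
      * apply H2. destruct (sd Y), s; simpl in *; congruence.
      * apply H1. destruct (sd Y), s; simpl in *; congruence.
    + apply IHg2; auto. intro X; specialize (Hcb X); lia.
      intros Z r E. apply Hb. destruct (bside (flip s) g1 Z) eqn:E1; auto.
      exfalso. assert (count_binders Z g1 >= 1) by (eapply bside_count; rewrite E1; congruence).
      assert (count_binders Z g2 >= 1) by (eapply bside_count; rewrite E; congruence).
      specialize (Hcb Z); lia.
      intros Y HY. destruct (Hf Y (or_intror HY)); split; intros; try tauto.
  - first [contradiction | apply IHg; auto].
  - destruct Hmu as [Hpos Hmu]. split.
    + apply Hb. rewrite Nat.eqb_refl; auto.
    + apply IHg; auto.
      * intro Y. specialize (Hcb Y). destruct (Nat.eqb X Y); lia.
      * intros Z r E. apply Hb. destruct (Nat.eqb X Z) eqn:E1; auto.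
        apply Nat.eqb_eq in E1; subst. exfalso.
        assert (count_binders Z g >= 1) by (eapply bside_count; rewrite E; congruence).
        specialize (Hcb Z); rewrite Nat.eqb_refl in Hcb; lia.
      * intros Y HY. destruct (Nat.eq_dec X Y) as [<-|Hn].
        -- assert (sd X = s) by (apply Hb; rewrite Nat.eqb_refl; auto).
           split; intro; [auto|congruence].
        -- destruct (Hf Y (conj Hn HY)) as [H1 H2]; split; intro H3.
           ++ destruct (H1 H3); [congruence|auto].
           ++ destruct (H2 H3); [congruence|auto].
Qed.

Lemma okside_sub : forall sd g s h, okside sd s g -> subform h g -> exists s', okside sd s' h.
Proof.
  induction g; intros s h Ho Hs; destruct Hs as [Hs|Hs]; subst; try (exists s; exact Ho);
  simpl in Ho; try contradiction.
  - destruct Ho; destruct Hs as [Hs|Hs]; [eapply IHg1|eapply IHg2]; eauto.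
  - destruct Ho; destruct Hs as [Hs|Hs]; [eapply IHg1|eapply IHg2]; eauto.
  - destruct Ho; destruct Hs as [Hs|Hs]; [eapply IHg1|eapply IHg2]; eauto.
  - eapply IHg; eauto.
  - eapply IHg; eauto.
  - eapply IHg; eauto.
  - destruct Ho; eapply IHg; eauto.
Qed.

Section Phi0.
Variable phi0 : form.
Hypothesis Hmu : mu_form phi0.
Hypothesis Hwb : well_bounded phi0.
Hypothesis Hsent : sentence phi0.

Definition sd (Y : nat) : side := match bside SR phi0 Y with Some s => s | None => SR end.

Lemma okside_phi0 : okside sd SR phi0.
Proof.
  apply okside_gen; auto.
  - intros Z r E; unfold sd; rewrite E; auto.
  - intros Y HY; exfalso; apply (Hsent Y HY).
Qed.

Lemma okside_binder : forall X e a, binds phi0 X e a -> okside sd (sd X) a.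
Proof.
  intros X e a Hb. destruct (okside_sub _ _ _ _ okside_phi0 Hb) as [s' [H1 H2]].
  rewrite H1; auto.
Qed.

Lemma binds_unique : forall X e a e' a', binds phi0 X e a -> binds phi0 X e' a' -> e = e' /\ a = a'.
Proof.
  intros X e a e' a' H1 H2. unfold binds in *.
  apply In_binders in H1; apply In_binders in H2.
  pose proof (nodup_map_inj ename _ _ _ (wb_nodup _ Hwb) H1 H2 eq_refl) as E.
  inversion E; auto.
Qed.

Lemma free_anc : forall g Y, subform g phi0 -> occurs_free Y g ->
  exists e b, binds phi0 Y e b /\ subform g b.
Proof.
  intros g Y Hs Hf. destruct (free_sub phi0 g Y Hs Hf) as [H|H]; auto.
  exfalso; apply (Hsent Y H).
Qed.

Lemma binds_mu : forall X e a, binds phi0 X e a -> mu_form a /\ pos X a.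
Proof.
  intros X e a H. pose proof (mu_form_sub _ _ Hmu H) as Hm. simpl in Hm; tauto.
Qed.

Lemma nodup_app_disj : forall {A} (l1 l2 : list A) x, NoDup (l1 ++ l2) -> In x l1 -> In x l2 -> False.
Proof.
  induction l1; simpl; intros l2 x Hn H1 H2; [contradiction|].
  inversion Hn; subst. destruct H1 as [->|H1].
  - apply H3. apply in_or_app; auto.
  - eapply IHl1; eauto.
Qed.

Lemma anc_precede : forall l1 l2 e Y a X, binders phi0 = l1 ++ l2 -> In (e, Y, a) l1 ->
  occurs_free X (FFix e Y a) -> In X (names l1).
Proof.
  intros l1 l2 e Y a X E HIn Hf.
  assert (HY : binds phi0 Y e a) by (apply In_binders; rewrite E; apply in_or_app; auto).
  destruct (free_anc _ _ HY Hf) as [eX [bX [HX Hsub]]].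
  destruct (binders_split _ _ _ _ HX) as [L1 [L2 E2]].
  destruct (classic (In X (names l1))) as [H|H]; auto. exfalso.
  rewrite E in E2. apply app_eq_app in E2.
  assert (HYb : In (e, Y, a) (binders bX)) by (apply In_binders; auto).
  pose proof (wb_nodup _ Hwb) as ND. rewrite E in ND. unfold names in ND.
  rewrite map_app in ND.
  assert (Hdup : In (e, Y, a) l2 -> False).
  { intro H2. apply (nodup_app_disj _ _ Y ND).
    - apply (in_map ename) in HIn; exact HIn.
    - apply (in_map ename) in H2; exact H2. }
  destruct E2 as [l' [[E3 E4]|[E3 E4]]].
  - destruct l' as [|h l'].
    + simpl in E4. apply Hdup. rewrite <- E4. simpl; right. apply in_or_app; auto.
    + inversion E4; subst. apply H. unfold names. rewrite map_app. apply in_or_app; right.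
      simpl; auto.
  - apply Hdup. rewrite E4. apply in_or_app; right. simpl; right. apply in_or_app; auto.
Qed.
End Phi0.

End Syn2.
Import Syn2.
Module Sem.
Import ListNotations.
Import ListNotations.

Section Model.
Variable M : CKModel.
Definition env := nat -> W M -> Prop.

Lemma upd_eq : forall (rho : env) X A, upd rho X A X = A.
Proof. intros; unfold upd; rewrite Nat.eqb_refl; auto. Qed.
Lemma upd_neq : forall (rho : env) X A Y, Y <> X -> upd rho X A Y = rho Y.
Proof. intros; unfold upd. apply Nat.eqb_neq in H; rewrite H; auto. Qed.

Lemma sem_agree_iff : forall g (r1 r2 : env), (forall Y, occurs_free Y g -> r1 Y = r2 Y) ->
  forall w, sem M r1 g w <-> sem M r2 g w.
Proof.
  induction g; simpl; intros r1 r2 H w.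
  - tauto.
  - rewrite H; auto. tauto.
  - tauto.
  - rewrite (IHg1 r1 r2), (IHg2 r1 r2); auto; tauto.
  - rewrite (IHg1 r1 r2), (IHg2 r1 r2); auto; tauto.
  - split; intros Hi v Hv; specialize (Hi v Hv);
    [rewrite <- (IHg1 r1 r2), <- (IHg2 r1 r2) | rewrite (IHg1 r1 r2), (IHg2 r1 r2)]; auto.
  - split; intros Hi v u Hv Hu; specialize (Hi v u Hv Hu);
    [rewrite <- (IHg r1 r2)|rewrite (IHg r1 r2)]; auto.
  - split; intros Hi v Hv; destruct (Hi v Hv) as [u [Hu1 Hu2]]; exists u; split; auto;
    [rewrite <- (IHg r1 r2)|rewrite (IHg r1 r2)]; auto.
  - split; intros [u [Hu1 Hu2]]; exists u; split; auto;
    [rewrite <- (IHg r1 r2)|rewrite (IHg r1 r2)]; auto.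
  - assert (HA : forall A u, sem M (upd r1 X A) g u <-> sem M (upd r2 X A) g u).
    { intros A u. apply IHg. intros Y HY. unfold upd. destruct (Nat.eqb_spec Y X); auto.
      }
    destruct e.
    + split; intros Hi A HAp; apply Hi; intros u Hu; apply HAp; apply HA; auto.
    + split; intros [A [HAp Hw]]; exists A; split; auto; intros u Hu; apply HA; auto.
Qed.

Lemma sem_agree : forall g (r1 r2 : env), (forall Y, occurs_free Y g -> r1 Y = r2 Y) ->
  sem M r1 g = sem M r2 g.
Proof.
  intros. apply functional_extensionality; intro w. apply propositional_extensionality.
  apply sem_agree_iff; auto.
Qed.

Definition Cmono (r1 r2 : env) g := forall Y, r1 Y = r2 Y \/ (pos Y g /\ ssub (r1 Y) (r2 Y))
  \/ (neg Y g /\ ssub (r2 Y) (r1 Y)).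

Lemma sem_mono : forall g r1 r2, Cmono r1 r2 g -> ssub (sem M r1 g) (sem M r2 g).
Proof.
  induction g; simpl; intros r1 r2 H w Hw; auto.
  - destruct (H X) as [E|[[_ Hs]|[Hn _]]].
    + rewrite <- E; auto.
    + apply Hs; auto.
    + simpl in Hn; congruence.
  - destruct Hw as [H1 H2]; split; [eapply IHg1|eapply IHg2]; eauto;
    intro Y; destruct (H Y) as [E|[[[Hp1 Hp2] Hs]|[[Hn1 Hn2] Hs]]]; auto.
  - destruct Hw as [H1|H2]; [left; eapply IHg1|right; eapply IHg2]; eauto;
    intro Y; destruct (H Y) as [E|[[[Hp1 Hp2] Hs]|[[Hn1 Hn2] Hs]]]; auto.
  - intros v Hv Ha. eapply IHg2; [|apply Hw; auto; eapply IHg1; [|exact Ha]].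
    + intro Y; destruct (H Y) as [E|[[[Hp1 Hp2] Hs]|[[Hn1 Hn2] Hs]]]; auto.
    + intro Y; destruct (H Y) as [E|[[[Hp1 Hp2] Hs]|[[Hn1 Hn2] Hs]]]; auto.
  - intros v u Hv Hu. eapply IHg; [|apply (Hw v u Hv Hu)].
    intro Y; destruct (H Y) as [E|[[Hp Hs]|[Hn Hs]]]; auto.
  - intros v Hv. destruct (Hw v Hv) as [u [Hu1 Hu2]]. exists u; split; auto.
    eapply IHg; [|exact Hu2].
    intro Y; destruct (H Y) as [E|[[Hp Hs]|[Hn Hs]]]; auto.
  - destruct Hw as [u [Hu1 Hu2]]. exists u; split; auto.
    eapply IHg; [|exact Hu2].
    intro Y; destruct (H Y) as [E|[[Hp Hs]|[Hn Hs]]]; auto.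
  - assert (HC : forall A, Cmono (upd r1 X A) (upd r2 X A) g).
    { intros A Y. unfold upd. destruct (Nat.eqb_spec Y X) as [->|Hn]; auto.
      destruct (H Y) as [E|[[[Hp|Hp] Hs]|[[Hn'|Hn'] Hs]]]; auto; congruence. }
    destruct e.
    + intros A HAp. apply Hw. intros u Hu. apply HAp. eapply IHg; eauto.
    + destruct Hw as [A [HAp HA]]. exists A; split; auto. intros u Hu. eapply IHg; eauto.
Qed.

Definition opf (X : nat) (a : form) (rho : env) (A : W M -> Prop) : W M -> Prop :=
  sem M (upd rho X A) a.

Lemma opf_mono : forall X a rho, pos X a -> forall A B, ssub A B -> ssub (opf X a rho A) (opf X a rho B).
Proof.
  intros X a rho Hp A B Hs. unfold opf. apply sem_mono. intro Y. unfold upd.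
  destruct (Nat.eqb_spec Y X) as [->|Hn]; auto.
Qed.

Definition upc := upclosed (wle M).

Lemma sem_up : forall g (rho : env), mu_form g -> (forall Y, upc (rho Y)) -> upc (sem M rho g).
Proof.
  induction g; simpl; intros rho Hm Hr u v Huv Hu.
  - eapply V_mono; eauto.
  - eapply Hr; eauto.
  - eapply Wbot_le; eauto.
  - destruct Hm; destruct Hu; split; [eapply IHg1|eapply IHg2]; eauto.
  - destruct Hm; destruct Hu; [left; eapply IHg1|right; eapply IHg2]; eauto.
  - intros v' Hv'. apply Hu. eapply wle_trans; eauto.
  - intros v' u' Hv' Hu'. apply (Hu v' u'); auto. eapply wle_trans; eauto.
  - intros v' Hv'. apply Hu. eapply wle_trans; eauto.
  - contradiction.
  - destruct Hm as [Hp Hm].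
    assert (Hupd : forall A, upc A -> forall Y, upc (upd rho X A Y)).
    { intros A HA Y. unfold upd. destruct (Nat.eqb Y X); auto. }
    destruct e.
    + intros A HAp.
      set (Ai := fun u => forall v, wle M u v -> A v).
      assert (HAi : upc Ai) by (intros a b Hab Ha c Hc; apply Ha; eapply wle_trans; eauto).
      assert (Hpre : forall u, sem M (upd rho X Ai) g u -> Ai u).
      { intros u0 Hu0 v0 Hv0. apply HAp.
        eapply (opf_mono X g rho Hp Ai A).
        - intros c Hc. apply Hc. apply wle_refl.
        - unfold opf. eapply IHg; eauto. }
      apply (Hu Ai Hpre v Huv).
    + destruct Hu as [A [HAp HA]].
      set (Au := fun u => exists u0, A u0 /\ wle M u0 u).
      assert (HAu : upc Au) by (intros a b Hab [c [Hc1 Hc2]]; exists c; split; auto; eapply wle_trans; eauto).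
      exists Au; split.
      * intros u0 [c [Hc1 Hc2]]. eapply IHg; eauto.
        eapply (opf_mono X g rho Hp A Au).
        -- intros d Hd; exists d; split; auto; apply wle_refl.
        -- apply HAp; auto.
      * exists u; split; auto.
Qed.

Lemma opf_up : forall X a (rho : env), mu_form a -> (forall Y, upc (rho Y)) ->
  forall A, upc A -> upc (opf X a rho A).
Proof.
  intros. unfold opf. apply sem_up; auto. intro Y. unfold upd. destruct (Nat.eqb Y X); auto.
Qed.

End Model.

End Sem.
Import Sem.
Module Env.
Import ListNotations.
Import ListNotations.

Lemma count_sub : forall f e Y a, subform (FFix e Y a) f -> count_binders Y f >= 1.
Proof.
  induction f; simpl; intros e0 Y a H; destruct H as [H|H]; try discriminate; try contradiction;
  try (destruct H as [H|H]; [apply IHf1 in H|apply IHf2 in H]; lia);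
  try (apply IHf in H; lia);
  try (inversion H; subst; rewrite Nat.eqb_refl; lia).
Qed.

Section EnvSec.
Variable M : CKModel.
Variable phi0 : form.
Hypothesis Hmu : mu_form phi0.
Hypothesis Hwb : well_bounded phi0.
Hypothesis Hsent : sentence phi0.

Definition progb (e : eta) (Y : nat) : bool :=
  match e, sd phi0 Y with Mu, SL | Nu, SR => true | _, _ => false end.

Fixpoint envF (tau : env M) (f : form) (rho : env M) : env M :=
  match f with
  | FFix e Y a => envF tau a (upd rho Y (if progb e Y then tau Y else sem M rho (FFix e Y a)))
  | FAnd a b | FOr a b | FImp a b => envF tau b (envF tau a rho)
  | FBox a | FDia a | FLDia a => envF tau a rho
  | _ => rho
  end.

Definition E (tau : env M) : env M := envF tau phi0 (fun _ _ => False).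

Lemma envF_nb : forall tau f rho Z, count_binders Z f = 0 -> envF tau f rho Z = rho Z.
Proof.
  intros tau; induction f; simpl; intros rho Z H; auto;
  try (rewrite IHf2 by lia; rewrite IHf1 by lia; auto).
  rewrite IHf by (destruct (Nat.eqb X Z); lia).
  destruct (Nat.eqb_spec X Z); [lia|]. rewrite upd_neq; auto.
Qed.

Lemma envF_fix : forall tau f rho, (forall X, count_binders X f <= 1) ->
  (forall Z, occurs_free Z f -> count_binders Z f = 0) ->
  forall e Y a, subform (FFix e Y a) f ->
  envF tau f rho Y = (if progb e Y then tau Y else sem M (envF tau f rho) (FFix e Y a)).
Proof.
  intros tau; induction f; cbn [envF subform count_binders occurs_free] in *; intros rho Hc Hf e0 Y a0 Hs; destruct Hs as [Hs|Hs];
  try discriminate; try contradiction.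
  1-3: destruct Hs as [Hs|Hs];
    [ assert (HY1 := count_sub _ _ _ _ Hs);
      assert (HY2 : count_binders Y f2 = 0) by (specialize (Hc Y); lia);
      rewrite envF_nb by auto;
      rewrite (IHf1 rho) with (e := e0) (a := a0); auto;
      [ destruct (progb e0 Y); auto;
        apply sem_agree; intros Z HZ;
        destruct (free_sub f1 _ Z Hs HZ) as [HZ1|[e1 [b1 [HZ1 _]]]];
        [ symmetry; apply envF_nb; specialize (Hf Z (or_introl HZ1)); lia
        | symmetry; apply envF_nb; assert (HZ2 := count_sub _ _ _ _ HZ1); specialize (Hc Z); lia ]
      | intro X; specialize (Hc X); lia
      | intros Z HZ; specialize (Hf Z (or_introl HZ)); lia ]
    | apply IHf2; auto;
      [ intro X; specialize (Hc X); lia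
      | intros Z HZ; specialize (Hf Z (or_intror HZ)); lia ] ].
  1-3: apply IHf; auto.
  - inversion Hs; subst. rewrite envF_nb.
    + rewrite upd_eq. destruct (progb e X); auto.
      apply sem_agree. intros Z [HZ1 HZ2]. rewrite envF_nb.
      * rewrite upd_neq by congruence; auto.
      * specialize (Hf Z (conj HZ1 HZ2)). destruct (Nat.eqb X Z); lia.
    + specialize (Hc X). rewrite Nat.eqb_refl in Hc. lia.
  - apply IHf; auto.
    + intro Z; specialize (Hc Z); lia.
    + intros Z HZ. destruct (Nat.eq_dec X Z) as [<-|Hn].
      * specialize (Hc X); rewrite Nat.eqb_refl in Hc; lia.
      * specialize (Hf Z (conj Hn HZ)). destruct (Nat.eqb X Z); lia.
Qed.

Lemma E_fix : forall tau e Y a, binds phi0 Y e a ->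
  E tau Y = (if progb e Y then tau Y else sem M (E tau) (FFix e Y a)).
Proof.
  intros. unfold E. apply envF_fix; auto.
  intros Z HZ; exfalso; apply (Hsent Z HZ).
Qed.

Lemma envF_agreeB : forall (B : nat -> Prop) tau1 tau2 f rho1 rho2,
  (forall e Y a, subform (FFix e Y a) f -> ~ B Y -> forall X, occurs_free X (FFix e Y a) -> ~ B X) ->
  (forall e Y a, subform (FFix e Y a) f -> ~ B Y -> progb e Y = true -> tau1 Y = tau2 Y) ->
  (forall X, ~ B X -> rho1 X = rho2 X) -> forall X, ~ B X -> envF tau1 f rho1 X = envF tau2 f rho2 X.
Proof.
  intros B tau1 tau2; induction f; cbn [envF subform] in *; intros rho1 rho2 Hcl Ht Hr X0 HX0; auto.
  1-3: apply IHf2; [intros e Y a H; eapply Hcl; right; right; exact H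
                  | intros e Y a H; eapply Ht; right; right; exact H | | exact HX0];
       apply IHf1; [intros e Y a H; eapply Hcl; right; left; exact H
                  | intros e Y a H; eapply Ht; right; left; exact H | auto].
  1-3: apply IHf; [intros e Y a H; eapply Hcl; right; exact H
                  | intros e Y a H; eapply Ht; right; exact H | auto | exact HX0].
  apply IHf; [intros e0 Y a H; eapply Hcl; right; exact H
             | intros e0 Y a H; eapply Ht; right; exact H | | exact HX0].
  intros Z HZ. unfold upd. destruct (Nat.eqb_spec Z X) as [->|Hn]; auto.
  destruct (progb e X) eqn:Ep.
  - eapply Ht; eauto.
  - apply sem_agree. intros Z' HZ'. apply Hr. eapply Hcl; eauto.
Qed.

Lemma E_agreeB : forall (B : nat -> Prop) tau1 tau2,
  (forall e Y a, binds phi0 Y e a -> ~ B Y -> forall X, occurs_free X (FFix e Y a) -> ~ B X) ->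
  (forall e Y a, binds phi0 Y e a -> ~ B Y -> progb e Y = true -> tau1 Y = tau2 Y) ->
  forall X, ~ B X -> E tau1 X = E tau2 X.
Proof. intros. unfold E. eapply envF_agreeB; eauto. Qed.

Lemma envF_up : forall tau f rho, mu_form f ->
  (forall e Y a, subform (FFix e Y a) f -> progb e Y = true -> upc M (tau Y)) ->
  (forall Y, upc M (rho Y)) -> forall Y, upc M (envF tau f rho Y).
Proof.
  intros tau; induction f; simpl; intros rho Hm Ht Hr; auto;
  try (destruct Hm; apply IHf2; auto; [intros; eapply Ht; eauto|];
       apply IHf1; auto; intros; eapply Ht; eauto);
  try (apply IHf; auto; intros; eapply Ht; eauto).
  contradiction.
  destruct Hm as [Hp Hm]. apply IHf; auto. intros; eapply Ht; eauto.
  intros Z. unfold upd. destruct (Nat.eqb Z X); auto.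
  destruct (progb e X) eqn:Ep.
  - eapply Ht; eauto.
  - apply (sem_up M (FFix e X f)); simpl; auto.
Qed.

End EnvSec.

End Env.
Import Env.
Module Env2.
Import ListNotations.
Import ListNotations.

Section Env2.
Variable M : CKModel.
Variable phi0 : form.
Hypothesis Hmu : mu_form phi0.
Hypothesis Hwb : well_bounded phi0.
Hypothesis Hsent : sentence phi0.

Notation E := (E M phi0).
Notation progb := (progb phi0).
Notation L := (binders phi0).

Definition TW (e : eta) (op : (W M -> Prop) -> W M -> Prop) (D : W M -> Prop) : Prop :=
  match e with Mu => LT (W M) op D | Nu => UT (W M) op D end.
Definition strictE (e : eta) (D D' : W M -> Prop) : Prop :=
  match e with Mu => sstrict D D' | Nu => sstrict D' D end.
Definition triv (e : eta) : W M -> Prop :=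
  match e with Mu => fun _ => False | Nu => fun _ => True end.

Definition coh (tau : env M) : Prop := forall e Y a, binds phi0 Y e a -> progb e Y = true ->
  TW e (opf M Y a (E tau)) (tau Y) /\ upc M (tau Y).

Fixpoint ltl (l : list entry) (t1 t2 : env M) : Prop :=
  match l with
  | [] => False
  | (e, Y, a) :: l' => (progb e Y = true /\ strictE e (t1 Y) (t2 Y)) \/
                       ((progb e Y = true -> t1 Y = t2 Y) /\ ltl l' t1 t2)
  end.
Fixpoint eql (l : list entry) (t1 t2 : env M) : Prop :=
  match l with
  | [] => True
  | (e, Y, a) :: l' => (progb e Y = true -> t1 Y = t2 Y) /\ eql l' t1 t2
  end.

Lemma eql_refl : forall l t, eql l t t.
Proof. induction l as [|[[e Y] a] l IH]; simpl; auto. Qed.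
Lemma eql_sym : forall l t1 t2, eql l t1 t2 -> eql l t2 t1.
Proof. induction l as [|[[e Y] a] l IH]; simpl; auto. intros t1 t2 [H1 H2]; split; auto.
  intro; symmetry; auto. Qed.
Lemma eql_trans : forall l t1 t2 t3, eql l t1 t2 -> eql l t2 t3 -> eql l t1 t3.
Proof. induction l as [|[[e Y] a] l IH]; simpl; auto. intros t1 t2 t3 [H1 H2] [H3 H4]; split; eauto.
  intro Hp; rewrite H1, H3; auto. Qed.

Lemma strictE_trans : forall e a b c, strictE e a b -> strictE e b c -> strictE e a c.
Proof.
  destruct e; simpl; intros a b c [H1 H2] [H3 H4]; split; intros.
  - intros w Hw; auto.
  - intro Hs; apply H4. intros w Hw; apply H1, Hs, Hw.
  - intros w Hw; auto.
  - intro Hs; apply H2. intros w Hw; apply H3, Hs, Hw.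
Qed.
Lemma strictE_irrefl : forall e a, ~ strictE e a a.
Proof. destruct e; simpl; intros a [H1 H2]; auto. Qed.

Lemma ltl_trans : forall l a b c, ltl l a b -> ltl l b c -> ltl l a c.
Proof.
  induction l as [|[[e Y] x] l IH]; simpl; auto.
  intros a b c [[Hp1 Hs1]|[He1 Hl1]] [[Hp2 Hs2]|[He2 Hl2]].
  - left; split; auto; eapply strictE_trans; eauto.
  - left; split; auto. rewrite <- (He2 Hp1); auto.
  - left; split; auto. rewrite (He1 Hp2); auto.
  - right; split; eauto. intro Hp; rewrite He1, He2; auto.
Qed.
Lemma ltl_eql_l : forall l a b c, eql l a b -> ltl l b c -> ltl l a c.
Proof.
  induction l as [|[[e Y] x] l IH]; simpl; auto.
  intros a b c [He Hl] [[Hp Hs]|[He2 Hl2]].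
  - left; split; auto; rewrite He; auto.
  - right; split; eauto. intro Hp; rewrite He, He2; auto.
Qed.
Lemma ltl_eql_r : forall l a b c, ltl l a b -> eql l b c -> ltl l a c.
Proof.
  induction l as [|[[e Y] x] l IH]; simpl; auto.
  intros a b c [[Hp Hs]|[He2 Hl2]] [He Hl].
  - left; split; auto; rewrite <- He; auto.
  - right; split; eauto. intro Hp; rewrite He2, He; auto.
Qed.
Lemma ltl_irrefl : forall l a, ~ ltl l a a.
Proof.
  induction l as [|[[e Y] x] l IH]; simpl; auto.
  intros a [[Hp Hs]|[_ H]]; [eapply strictE_irrefl; eauto|eapply IH; eauto].
Qed.
Lemma ltl_eql_false : forall l a b, ltl l a b -> eql l a b -> False.
Proof. intros l a b H1 H2. apply (ltl_irrefl l b). eapply ltl_eql_l; eauto using eql_sym. Qed.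

Lemma ltl_app : forall l1 l2 a b, ltl (l1 ++ l2) a b <-> ltl l1 a b \/ (eql l1 a b /\ ltl l2 a b).
Proof.
  induction l1 as [|[[e Y] x] l IH]; simpl; intros; [tauto|]. rewrite IH. tauto.
Qed.
Lemma eql_app : forall l1 l2 a b, eql (l1 ++ l2) a b <-> eql l1 a b /\ eql l2 a b.
Proof.
  induction l1 as [|[[e Y] x] l IH]; simpl; intros; [tauto|]. rewrite IH. tauto.
Qed.
Lemma eql_in : forall l a b e Y x, eql l a b -> In (e, Y, x) l -> progb e Y = true -> a Y = b Y.
Proof.
  induction l as [|[[e Y] x] l IH]; simpl; intros a b e0 Y0 x0 HH Hin Hp; [contradiction|].
  destruct HH as [H1 H2].
  destruct Hin as [Heq|Hin]; [inversion Heq; subst; auto|eauto].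
Qed.

Lemma entry_of_name : forall l2 l1 Y e a, L = l1 ++ l2 -> In Y (names l1) -> binds phi0 Y e a ->
  In (e, Y, a) l1.
Proof.
  intros l2 l1 Y e a HL HY Hb. unfold names in HY. apply in_map_iff in HY.
  destruct HY as [en [Hen Hin]].
  assert (Hin2 : In en L) by (rewrite HL; apply in_or_app; auto).
  assert (HbL : In (e, Y, a) L) by (apply In_binders; auto).
  assert (Heq : en = (e, Y, a)).
  { apply (nodup_map_inj ename L en (e, Y, a) (wb_nodup _ Hwb) Hin2 HbL). rewrite Hen; auto. }
  subst en; auto.
Qed.

Lemma E_eq_prefix : forall l1 l2 t1 t2, L = l1 ++ l2 -> eql l1 t1 t2 ->
  forall X, In X (names l1) -> E t1 X = E t2 X.
Proof.
  intros l1 l2 t1 t2 HL He X HX.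
  apply (E_agreeB M phi0 (fun X => ~ In X (names l1))).
  - intros e Y a Hb HY X0 Hf Hn. apply Hn. apply NNPP in HY.
    eapply anc_precede; eauto. eapply entry_of_name; eauto.
  - intros e Y a Hb HY Hp. apply NNPP in HY. eapply eql_in; eauto. eapply entry_of_name; eauto.
  - tauto.
Qed.

Lemma op_eq_prefix : forall l1 l2 e Y a t1 t2, L = l1 ++ (e, Y, a) :: l2 -> eql l1 t1 t2 ->
  opf M Y a (E t1) = opf M Y a (E t2).
Proof.
  intros l1 l2 e Y a t1 t2 HL He. apply functional_extensionality; intro A. unfold opf.
  apply sem_agree. intros X HX. unfold upd. destruct (Nat.eqb_spec X Y) as [->|Hn]; auto.
  eapply E_eq_prefix; eauto.
  assert (HX2 : In X (names (l1 ++ [(e, Y, a)]))).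
  { eapply anc_precede with (l2 := l2); eauto.
    - rewrite HL, <- app_assoc; auto.
    - apply in_or_app; right; simpl; auto.
    - simpl; auto. }
  unfold names in HX2. rewrite map_app in HX2. apply in_app_or in HX2.
  destruct HX2 as [H|[H|[]]]; auto. simpl in H; congruence.
Qed.

Definition TWR (e : eta) op (D' D : W M -> Prop) : Prop :=
  match e with Mu => LTR (W M) op D' D | Nu => UTR (W M) op D' D end.

Lemma TW_acc : forall e op, (forall A B, ssub A B -> ssub (op A) (op B)) ->
  forall D, TW e op D -> Acc (TWR e op) D.
Proof.
  destruct e; simpl; intros op Hm D H.
  - apply LT_acc; auto.
  - apply UT_acc; auto.
Qed.

Lemma TW_tot : forall e op, (forall A B, ssub A B -> ssub (op A) (op B)) ->
  forall D1 D2, TW e op D1 -> TW e op D2 -> D1 = D2 \/ strictE e D1 D2 \/ strictE e D2 D1.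
Proof.
  intros e op Hm D1 D2 H1 H2.
  assert (Ht : ssub D1 D2 \/ ssub D2 D1).
  { destruct e; simpl in *; [apply (LT_tot _ op)|apply (UT_tot _ op)]; auto. }
  destruct (classic (ssub D1 D2)) as [H12|H12]; destruct (classic (ssub D2 D1)) as [H21|H21].
  - left; apply set_ext; auto.
  - destruct e; simpl; [right; left|right; right]; split; auto.
  - destruct e; simpl; [right; right|right; left]; split; auto.
  - exfalso; tauto.
Qed.

Lemma binds_of_L : forall e Y a l1 l2, L = l1 ++ (e, Y, a) :: l2 -> binds phi0 Y e a.
Proof. intros. apply In_binders. rewrite H. apply in_or_app; right; simpl; auto. Qed.

Lemma op_mono_b : forall e Y a rho, binds phi0 Y e a ->
  forall A B, ssub A B -> ssub (opf M Y a rho A) (opf M Y a rho B).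
Proof. intros. apply opf_mono. apply (binds_mu phi0 Hmu Y e a); auto. auto. Qed.

Lemma prefix_acc : forall l1 l2, L = l1 ++ l2 ->
  forall tau, coh tau -> Acc (fun t1 t2 => coh t1 /\ coh t2 /\ ltl l1 t1 t2) tau.
Proof.
  induction l1 as [|h l IH] using rev_ind; intros l2 HL tau Htau.
  - constructor. intros y [_ [_ []]].
  - destruct h as [[e Y] a].
    assert (HL' : L = l ++ (e, Y, a) :: l2) by (rewrite HL, <- app_assoc; auto).
    assert (Hb : binds phi0 Y e a) by (eapply binds_of_L; eauto).
    assert (Hsplit : forall t1 t2, ltl (l ++ [(e, Y, a)]) t1 t2 ->
              ltl l t1 t2 \/ (eql l t1 t2 /\ progb e Y = true /\ strictE e (t1 Y) (t2 Y))).
    { intros t1 t2 H. apply ltl_app in H. simpl in H. tauto. }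
    pose proof (IH ((e, Y, a) :: l2) HL' tau Htau) as Hacc. clear IH.
    revert Htau. induction Hacc as [tau _ IHout]. intro Htau.
    destruct (progb e Y) eqn:Ep.
    + destruct (Htau e Y a Hb Ep) as [HTW _].
      assert (Hin : forall D, Acc (TWR e (opf M Y a (E tau))) D -> forall t1, coh t1 -> eql l t1 tau ->
                 t1 Y = D -> Acc (fun t1 t2 => coh t1 /\ coh t2 /\ ltl (l ++ [(e, Y, a)]) t1 t2) t1).
      { intros D HD. induction HD as [D _ IHin]. intros t1 Hc1 He1 HD1. constructor.
        intros t2 [Hc2 [_ Hlt]]. destruct (Hsplit _ _ Hlt) as [Hl|[He2 [_ Hs]]].
        - apply IHout; auto. split; auto. split; auto. eapply ltl_eql_r; eauto.
        - apply (IHin (t2 Y)); auto.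
          + destruct (Hc2 e Y a Hb Ep) as [HT2 _].
            rewrite (op_eq_prefix l l2 e Y a t2 tau HL' (eql_trans _ _ _ _ He2 He1)) in HT2.
            destruct e; simpl in *; split; auto; rewrite <- HD1; auto.
          + eapply eql_trans; eauto. }
      apply (Hin (tau Y)); auto. apply TW_acc; auto. apply (op_mono_b e); auto. apply eql_refl.
    + constructor. intros t2 [Hc2 [_ Hlt]]. destruct (Hsplit _ _ Hlt) as [Hl|[_ [Hp _]]].
      * apply IHout; auto.
      * discriminate.
Qed.

Lemma prefix_tot : forall l1 l2, L = l1 ++ l2 -> forall t1 t2, coh t1 -> coh t2 ->
  ltl l1 t1 t2 \/ eql l1 t1 t2 \/ ltl l1 t2 t1.
Proof.
  induction l1 as [|h l IH] using rev_ind; intros l2 HL t1 t2 H1 H2.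
  - simpl; auto.
  - destruct h as [[e Y] a].
    assert (HL' : L = l ++ (e, Y, a) :: l2) by (rewrite HL, <- app_assoc; auto).
    assert (Hb : binds phi0 Y e a) by (eapply binds_of_L; eauto).
    rewrite !ltl_app, eql_app. simpl.
    destruct (IH _ HL' t1 t2 H1 H2) as [H|[H|H]]; [tauto| |tauto].
    destruct (progb e Y) eqn:Ep.
    + destruct (H1 e Y a Hb Ep) as [T1 _]. destruct (H2 e Y a Hb Ep) as [T2 _].
      rewrite (op_eq_prefix l l2 e Y a t2 t1 HL' (eql_sym _ _ _ H)) in T2.
      destruct (TW_tot e _ (op_mono_b e Y a _ Hb) _ _ T1 T2) as [He|[Hs|Hs]].
      * right; left; split; auto.
      * left; right; split; auto.
      * right; right; right; split; auto. apply eql_sym; auto.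
    + right; left; split; auto. split; auto. intro; discriminate.
Qed.

Lemma least_ex : forall (P : env M -> Prop) tau, coh tau -> P tau ->
  exists t0, coh t0 /\ P t0 /\ forall t, coh t -> P t -> ltl L t0 t \/ eql L t0 t.
Proof.
  intros P tau Hc HP.
  assert (HL : L = L ++ []) by (rewrite app_nil_r; auto).
  pose proof (prefix_acc L [] HL tau Hc) as Hacc.
  revert Hc HP. induction Hacc as [tau _ IH]. intros Hc HP.
  destruct (classic (exists t, coh t /\ P t /\ ltl L t tau)) as [[t [Ht1 [Ht2 Ht3]]]|Hn].
  - apply (IH t); auto.
  - exists tau; split; auto; split; auto. intros t Ht HPt.
    destruct (prefix_tot L [] HL tau t Hc Ht) as [H|[H|H]]; auto.
    exfalso; apply Hn; exists t; auto.
Qed.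

Lemma eql_E : forall t1 t2, eql L t1 t2 -> E t1 = E t2.
Proof.
  intros t1 t2 He. apply functional_extensionality; intro X.
  apply (E_agreeB M phi0 (fun _ => False)); auto.
  intros e Y a Hb _ Hp. apply (eql_in L t1 t2 e Y a); auto. apply In_binders; auto.
Qed.

End Env2.

End Env2.
Import Env2.
Module Env3.
Import ListNotations.
Import ListNotations.

Section Env3.
Variable M : CKModel.
Variable phi0 : form.
Hypothesis Hmu : mu_form phi0.
Hypothesis Hwb : well_bounded phi0.
Hypothesis Hsent : sentence phi0.

Notation E := (E M phi0).
Notation progb := (progb phi0).
Notation L := (binders phi0).
Notation coh := (coh M phi0).
Notation TW := (TW M).
Notation triv := (triv M).
Notation ltl := (ltl M phi0).
Notation eql := (eql M phi0).

Definition descv (Z Y : nat) : Prop :=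
  exists eZ aZ e b, binds phi0 Z eZ aZ /\ subform (FFix e Y b) aZ.

Definition etaOf (Y : nat) : eta :=
  match find (fun en => Nat.eqb (ename en) Y) L with Some (e, _, _) => e | None => Mu end.

Lemma etaOf_binds : forall Y e a, binds phi0 Y e a -> etaOf Y = e.
Proof.
  intros Y e a Hb. unfold etaOf.
  destruct (find (fun en => Nat.eqb (ename en) Y) L) as [[[e' Y'] a']|] eqn:Ef.
  - apply find_some in Ef. destruct Ef as [Hin Heq]. simpl in Heq. apply Nat.eqb_eq in Heq; subst.
    apply In_binders in Hin. destruct (binds_unique phi0 Hwb Y e' a' e a Hin Hb); auto.
  - exfalso. apply In_binders in Hb. eapply find_none in Ef; eauto. simpl in Ef.
    rewrite Nat.eqb_refl in Ef; discriminate.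
Qed.

Definition Mod (tau : env M) (Z : nat) (D : W M -> Prop) : env M :=
  fun Y => if Nat.eqb Y Z then D
           else if excluded_middle_informative (descv Z Y) then triv (etaOf Y) else tau Y.

Definition inB (Z X : nat) : Prop := X = Z \/ descv Z X.

Lemma sub_binds : forall Z eZ aZ e Y b, binds phi0 Z eZ aZ -> subform (FFix e Y b) aZ ->
  binds phi0 Y e b.
Proof.
  intros. unfold binds in *. eapply subform_trans; [exact H|].
  eapply subform_trans; [apply subform_fix_body|exact H0].
Qed.

Lemma inB_closed : forall Z e Y a, binds phi0 Y e a -> ~ inB Z Y ->
  forall X, occurs_free X (FFix e Y a) -> ~ inB Z X.
Proof.
  intros Z e Y a Hb HnY X Hf HX. apply HnY.
  destruct (free_anc phi0 Hsent _ _ Hb Hf) as [eX [bX [HbX Hsub]]].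
  destruct HX as [->|[eZ [aZ [e' [b' [HbZ Hs]]]]]].
  - right. exists eX, bX, e, a. auto.
  - right. exists eZ, aZ, e, a. split; auto.
    pose proof (sub_binds _ _ _ _ _ _ HbZ Hs) as HbX'.
    destruct (binds_unique phi0 Hwb X e' b' eX bX HbX' HbX) as [-> ->].
    eapply subform_trans; [exact Hs|]. eapply subform_trans; [apply subform_fix_body|exact Hsub].
Qed.

Lemma Mod_out : forall tau Z D Y, ~ inB Z Y -> Mod tau Z D Y = tau Y.
Proof.
  intros tau Z D Y H. unfold Mod. destruct (Nat.eqb_spec Y Z); [exfalso; apply H; left; auto|].
  destruct (excluded_middle_informative (descv Z Y)); auto. exfalso; apply H; right; auto.
Qed.

Lemma E_Mod_out : forall tau Z D X, ~ inB Z X -> E (Mod tau Z D) X = E tau X.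
Proof.
  intros tau Z D X HX. apply (E_agreeB M phi0 (inB Z)); auto.
  - intros e Y a Hb HY X0 Hf. eapply inB_closed; eauto.
  - intros e Y a Hb HY _. apply Mod_out; auto.
Qed.

Lemma E_Mod_Z : forall tau Z eZ aZ D, binds phi0 Z eZ aZ -> progb eZ Z = true -> E (Mod tau Z D) Z = D.
Proof.
  intros. rewrite (E_fix M phi0 Hwb Hsent _ eZ Z aZ H), H0. unfold Mod. rewrite Nat.eqb_refl; auto.
Qed.

Lemma anc_not_B : forall Z eZ aZ X, binds phi0 Z eZ aZ -> occurs_free X (FFix eZ Z aZ) -> ~ inB Z X.
Proof.
  intros Z eZ aZ X Hb Hf [HX|[eZ' [aZ' [e [b [HbZ Hs]]]]]].
  - subst. destruct Hf; auto.
  - destruct (binds_unique phi0 Hwb Z eZ' aZ' eZ aZ HbZ Hb) as [-> ->].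
    destruct (free_anc phi0 Hsent _ _ Hb Hf) as [eX [bX [HbX Hsub]]].
    pose proof (sub_binds _ _ _ _ _ _ Hb Hs) as HbX'.
    destruct (binds_unique phi0 Hwb X e b eX bX HbX' HbX) as [-> ->].
    apply subform_size in Hsub. apply subform_size in Hs. simpl in *. lia.
Qed.

Lemma sem_Mod : forall tau Z eZ aZ D, binds phi0 Z eZ aZ -> progb eZ Z = true ->
  sem M (E (Mod tau Z D)) aZ = opf M Z aZ (E tau) D.
Proof.
  intros tau Z eZ aZ D Hb Hp. unfold opf. apply sem_agree. intros X HX.
  destruct (Nat.eq_dec X Z) as [->|Hn].
  - rewrite upd_eq. eapply E_Mod_Z; eauto.
  - rewrite upd_neq by auto. apply E_Mod_out. eapply anc_not_B; eauto. simpl; auto.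
Qed.

Lemma opf_Mod : forall tau Z eZ aZ D, binds phi0 Z eZ aZ ->
  opf M Z aZ (E (Mod tau Z D)) = opf M Z aZ (E tau).
Proof.
  intros tau Z eZ aZ D Hb. apply functional_extensionality; intro A. unfold opf. apply sem_agree.
  intros X HX. unfold upd. destruct (Nat.eqb_spec X Z) as [->|Hn]; auto.
  apply E_Mod_out. eapply anc_not_B; eauto. simpl; auto.
Qed.

Lemma TW_triv : forall e op, TW e op (triv e).
Proof.
  destruct e; simpl; intros op.
  - apply LT_empty.
  - apply UT_full.
Qed.
Lemma upc_triv : forall e, upc M (triv e).
Proof. destruct e; simpl; intros u v _ H; auto. Qed.

Lemma Mod_coh : forall tau Z eZ aZ D, coh tau -> binds phi0 Z eZ aZ -> progb eZ Z = true ->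
  TW eZ (opf M Z aZ (E tau)) D -> upc M D -> coh (Mod tau Z D).
Proof.
  intros tau Z eZ aZ D Hc Hb Hp HT Hu e Y a HbY HpY.
  destruct (classic (inB Z Y)) as [HB|HB].
  - destruct (Nat.eq_dec Y Z) as [->|Hn].
    + destruct (binds_unique phi0 Hwb Z e a eZ aZ HbY Hb) as [-> ->].
      unfold Mod at 2 3. rewrite Nat.eqb_refl. rewrite (opf_Mod tau Z eZ aZ D Hb). auto.
    + destruct HB as [HB|HB]; [contradiction|].
      unfold Mod at 2 3. apply Nat.eqb_neq in Hn. rewrite Hn.
      destruct (excluded_middle_informative (descv Z Y)); [|contradiction].
      rewrite (etaOf_binds Y e a HbY). split; [apply TW_triv|apply upc_triv].
  - rewrite !Mod_out by auto.
    replace (opf M Y a (E (Mod tau Z D))) with (opf M Y a (E tau)); [apply Hc; auto|].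
    apply functional_extensionality; intro A. unfold opf. apply sem_agree.
    intros X HX. unfold upd. destruct (Nat.eqb_spec X Y) as [->|Hn]; auto.
    symmetry. apply E_Mod_out. eapply inB_closed; eauto. simpl; auto.
Qed.

Definition tautriv : env M := fun Y => triv (etaOf Y).
Lemma tautriv_coh : coh tautriv.
Proof.
  intros e Y a Hb Hp. unfold tautriv. rewrite (etaOf_binds Y e a Hb).
  split; [apply TW_triv|apply upc_triv].
Qed.

Lemma eql_of_names : forall l (t1 t2 : env M), (forall Y, In Y (names l) -> t1 Y = t2 Y) -> eql l t1 t2.
Proof.
  induction l as [|[[e Y] a] l IH]; intros t1 t2 H; [exact I|]. split.
  - intros _. apply H; simpl; auto.
  - apply IH. intros Y0 HY0. apply H; simpl; auto.
Qed.

Section Prefix.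
Variables (X : nat) (eX : eta) (aX : form) (l1 l2 : list entry).
Hypothesis HLs : L = l1 ++ (eX, X, aX) :: binders aX ++ l2.
Hypothesis HbX : binds phi0 X eX aX.
Definition Pfx := l1 ++ [(eX, X, aX)].

Lemma Pfx_disj : forall Y, In Y (names Pfx) -> In Y (names (binders aX)) -> False.
Proof.
  intros Y H1 H2. pose proof (wb_nodup _ Hwb) as ND. rewrite HLs in ND.
  replace (l1 ++ (eX, X, aX) :: binders aX ++ l2) with (Pfx ++ binders aX ++ l2) in ND
    by (unfold Pfx; rewrite <- app_assoc; auto).
  unfold names in ND. rewrite map_app in ND.
  apply (nodup_app_disj _ _ Y ND H1). rewrite map_app. apply in_or_app; auto.
Qed.

Lemma descX_in : forall Z, descv X Z -> In Z (names (binders aX)).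
Proof.
  intros Z [eZ [aZ [e [b [Hb Hs]]]]].
  destruct (binds_unique phi0 Hwb X eZ aZ eX aX Hb HbX) as [-> ->].
  apply in_map_iff. exists (e, Z, b). split; auto. apply In_binders; auto.
Qed.

Lemma desc_trans : forall Z Y, descv X Z -> descv Z Y -> descv X Y.
Proof.
  intros Z Y [e1 [a1 [e2 [b2 [H1 H2]]]]] [e3 [a3 [e4 [b4 [H3 H4]]]]].
  pose proof (sub_binds _ _ _ _ _ _ H1 H2) as HZ.
  destruct (binds_unique phi0 Hwb Z e3 a3 e2 b2 H3 HZ) as [-> ->].
  exists e1, a1, e4, b4. split; auto. eapply subform_trans; [exact H2|].
  eapply subform_trans; [apply subform_fix_body|exact H4].
Qed.

Lemma Pfx_in_entry : forall e Y a, In (e, Y, a) Pfx -> In Y (names Pfx).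
Proof. intros. apply in_map_iff. exists (e, Y, a); auto. Qed.

Lemma Mod_eql_P : forall tau Z D, descv X Z -> eql Pfx (Mod tau Z D) tau.
Proof.
  intros tau Z D HZ.
  assert (H : forall Y, In Y (names Pfx) -> Mod tau Z D Y = tau Y).
  { intros Y HY. apply Mod_out. intros [->|HD].
    - apply (Pfx_disj Z HY). apply descX_in; auto.
    - apply (Pfx_disj Y HY). apply descX_in. eapply desc_trans; eauto. }
  apply eql_of_names; auto.
Qed.

Lemma Mod_ltl_P : forall tau D, progb eX X = true -> strictE M eX D (tau X) ->
  ltl Pfx (Mod tau X D) tau.
Proof.
  intros tau D Hp Hs. unfold Pfx. apply ltl_app. right. split.
  - assert (H : forall Y, In Y (names l1) -> Mod tau X D Y = tau Y).
    { intros Y HY. apply Mod_out. intros [->|HD].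
      - pose proof (wb_nodup _ Hwb) as ND. rewrite HLs in ND. unfold names in ND.
        rewrite map_app in ND. apply (nodup_app_disj _ _ X ND HY). simpl; auto.
      - apply (Pfx_disj Y). unfold Pfx, names; rewrite map_app; apply in_or_app; auto.
        apply descX_in; auto. }
    apply eql_of_names; auto.
  - simpl. left. split; auto. unfold Mod. rewrite Nat.eqb_refl. auto.
Qed.

Lemma full_to_P : forall a b, ltl L a b \/ eql L a b -> ltl Pfx a b \/ eql Pfx a b.
Proof.
  intros a b H. rewrite HLs in H.
  replace (l1 ++ (eX, X, aX) :: binders aX ++ l2) with (Pfx ++ (binders aX ++ l2)) in H
    by (unfold Pfx; rewrite <- app_assoc; auto).
  rewrite ltl_app, eql_app in H. tauto.
Qed.
End Prefix.

End Env3.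

End Env3.
Import Env3.
Module Seq.
Import ListNotations.
Import ListNotations.

Section SeqSec.
Variable M : CKModel.
Variable phi0 : form.
Hypothesis Hmu : mu_form phi0.
Hypothesis Hwb : well_bounded phi0.
Hypothesis Hsent : sentence phi0.

Notation E := (E M phi0).
Notation progb := (progb phi0).
Notation L := (binders phi0).
Notation coh := (coh M phi0).
Notation ltl := (ltl M phi0).
Notation eql := (eql M phi0).
Notation sd := (sd phi0).
Notation Mod := (Mod M phi0).
Notation etaOf := (etaOf phi0).

Definition holds (rho : nat -> W M) (tau : env M) (sf : sform) : Prop :=
  match sf with
  | (SL, x, g) => sem M (E tau) g (rho x)
  | (SR, x, g) => ~ sem M (E tau) g (rho x)
  end.

Definition atom_ok (rho : nat -> W M) (t : atom) : Prop :=
  match t with ALe x y => wle M (rho x) (rho y) | ARel x y => wR M (rho x) (rho y) end.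

Definition SI (c : sequent) (rho : nat -> W M) : Prop :=
  (forall t, In t (atoms c) -> atom_ok rho t) /\
  (forall sf, in_sequent c sf -> exists tau, coh tau /\ holds rho tau sf).

Definition wfs (sf : sform) : Prop :=
  match sf with
  | (s, x, g) => okside sd s g /\ (subform g phi0 \/ (s = SR /\ exists a, g = FLDia a /\ subform a phi0))
  end.
Definition SynInv (c : sequent) : Prop := forall sf, in_sequent c sf -> wfs sf.

Definition least (rho : nat -> W M) (sf : sform) (tau : env M) : Prop :=
  coh tau /\ holds rho tau sf /\ forall t, coh t -> holds rho t sf -> ltl L tau t \/ eql L tau t.

Definition Rel (g : form) (tp t' : env M) : Prop :=
  (forall Z, g = FVar Z -> progb (etaOf Z) Z = true ->
     exists D, t' = Mod tp Z D /\ strictE M (etaOf Z) D (tp Z)) /\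
  (t' = tp \/ exists Z D, t' = Mod tp Z D /\ ((exists e b, g = FFix e Z b) \/ g = FVar Z)).

Definition GS (c : sequent) (pr : option sform) (m : sform -> Prop) (p : sequent)
  (rho rho' : nat -> W M) : Prop :=
  forall s x g, pr = Some (s, x, g) -> exists tp, least rho (s, x, g) tp /\
    forall sf, m sf -> in_sequent p sf -> exists t', coh t' /\ holds rho' t' sf /\ Rel g tp t'.

Definition StepOK (c : sequent) (ps : list sequent) (pr : option sform)
  (ms : list (sform -> Prop)) (rho : nat -> W M) : Prop :=
  exists i p rho', nth_error ps i = Some p /\ SynInv p /\ SI p rho' /\
    (forall l, occurs_label l c -> rho' l = rho l) /\ GS c pr (nth i ms (fun _ => False)) p rho rho'.

Lemma in_seq_label : forall c s x g, in_sequent c (s, x, g) -> occurs_label x c.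
Proof. intros c [] x g H; right; exists g; simpl in H; auto. Qed.

Lemma atom_label_l : forall c x y, In (ALe x y) (atoms c) -> occurs_label x c /\ occurs_label y c.
Proof. intros; split; left; [exists y|exists x]; auto. Qed.
Lemma atom_label_r : forall c x y, In (ARel x y) (atoms c) -> occurs_label x c /\ occurs_label y c.
Proof. intros; split; left; [exists y|exists x]; auto 10. Qed.

Lemma holds_same : forall rho rho' tau c sf, in_sequent c sf ->
  (forall l, occurs_label l c -> rho' l = rho l) -> holds rho tau sf -> holds rho' tau sf.
Proof.
  intros rho rho' tau c [[s x] g] Hin Hl H. pose proof (in_seq_label _ _ _ _ Hin) as Hx.
  destruct s; simpl in *; rewrite (Hl x Hx); auto.
Qed.

Lemma atom_same : forall rho rho' c t, In t (atoms c) ->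
  (forall l, occurs_label l c -> rho' l = rho l) -> atom_ok rho t -> atom_ok rho' t.
Proof.
  intros rho rho' c [x y|x y] Hin Hl H; simpl in *.
  - destruct (atom_label_l _ _ _ Hin). rewrite !Hl; auto.
  - destruct (atom_label_r _ _ _ Hin). rewrite !Hl; auto.
Qed.

Lemma child_SI : forall c p rho rho', SI c rho ->
  (forall l, occurs_label l c -> rho' l = rho l) ->
  (forall t, In t (atoms p) -> In t (atoms c) \/ atom_ok rho' t) ->
  (forall sf, in_sequent p sf -> in_sequent c sf \/ exists tau, coh tau /\ holds rho' tau sf) ->
  SI p rho'.
Proof.
  intros c p rho rho' [Ha Hf] Hl Hat Hsf. split.
  - intros t Ht. destruct (Hat t Ht) as [H|H]; auto. eapply atom_same; eauto.
  - intros sf Hs. destruct (Hsf sf Hs) as [H|H]; auto.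
    destruct (Hf sf H) as [tau [Hc Hh]]. exists tau; split; auto. eapply holds_same; eauto.
Qed.

Lemma child_Syn : forall c p, SynInv c ->
  (forall sf, in_sequent p sf -> in_sequent c sf \/ wfs sf) -> SynInv p.
Proof. intros c p Hc H sf Hs. destruct (H sf Hs); auto. Qed.

Lemma in_seq_L : forall c x g, in_sequent c (SL, x, g) <-> In (x, g) (lhs c).
Proof. reflexivity. Qed.
Lemma in_seq_R : forall c x g, in_sequent c (SR, x, g) <-> In (x, g) (rhs c).
Proof. reflexivity. Qed.

Lemma E_upc : forall tau, coh tau -> forall Y, upc M (E tau Y).
Proof.
  intros tau Hc Y. unfold Env.E. apply envF_up; auto.
  - intros e Y0 a Hs Hp. apply (Hc e Y0 a Hs Hp).
  - intros Y0 u v _ [].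
Qed.

Lemma upd_self : forall (rho : env M) X, upd rho X (rho X) = rho.
Proof.
  intros rho X. apply functional_extensionality; intro Y. unfold upd.
  destruct (Nat.eqb_spec Y X); subst; auto.
Qed.

Lemma gfp_post : forall X b (rho : env M) w, pos X b -> sem M rho (FFix Nu X b) w ->
  opf M X b rho (sem M rho (FFix Nu X b)) w.
Proof.
  intros X b rho w Hp [A [HA Hw]]. eapply (opf_mono M X b rho Hp A); [|apply HA; auto].
  intros u Hu. exists A; split; auto.
Qed.

Lemma lfp_pre : forall X b (rho : env M) w, pos X b ->
  opf M X b rho (sem M rho (FFix Mu X b)) w -> sem M rho (FFix Mu X b) w.
Proof.
  intros X b rho w Hp H A HA. apply HA. eapply (opf_mono M X b rho Hp); [|exact H].
  intros u Hu. apply Hu; auto.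
Qed.

End SeqSec.

End Seq.
Import Seq.
Module Rules.
Import ListNotations.
Import ListNotations.

Section RulesSec.
Variable M : CKModel.
Variable phi0 : form.
Hypothesis Hmu : mu_form phi0.
Hypothesis Hwb : well_bounded phi0.
Hypothesis Hsent : sentence phi0.

Notation E := (E M phi0).
Notation progb := (progb phi0).
Notation L := (binders phi0).
Notation coh := (coh M phi0).
Notation ltl := (ltl M phi0).
Notation eql := (eql M phi0).
Notation sd := (sd phi0).
Notation Mod := (Mod M phi0).
Notation etaOf := (etaOf phi0).
Notation holds := (holds M phi0).
Notation SI := (SI M phi0).
Notation SynInv := (SynInv phi0).
Notation wfs := (wfs phi0).
Notation least := (least M phi0).
Notation Rel := (Rel M phi0).
Notation GS := (GS M phi0).
Notation StepOK := (StepOK M phi0).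

Lemma op_up_tau : forall tau X b e, coh tau -> binds phi0 X e b ->
  forall A, upc M A -> upc M (opf M X b (E tau) A).
Proof.
  intros tau X b e Hc Hb A HA. apply opf_up; auto.
  - apply (binds_mu phi0 Hmu X e b Hb).
  - apply E_upc; auto.
Qed.

Lemma regenL_sem : forall X e b tp w, binds phi0 X e b -> sd X = SL -> coh tp -> E tp X w ->
  exists t', coh t' /\ sem M (E t') b w /\ Rel (FVar X) tp t'.
Proof.
  intros X e b tp w Hb Hsd Hc Hw.
  pose proof (binds_mu phi0 Hmu X e b Hb) as [Hmb Hpos].
  assert (Hmono := opf_mono M X b (E tp) Hpos).
  rewrite (E_fix M phi0 Hwb Hsent tp e X b Hb) in Hw.
  destruct e; unfold Env.progb in Hw; rewrite Hsd in Hw.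
  - assert (Hp : progb Mu X = true) by (unfold Env.progb; rewrite Hsd; auto).
    destruct (Hc Mu X b Hb Hp) as [HT Hu]. simpl in HT.
    destruct (LT_decomp _ _ Hmono _ HT w Hw) as [B [HB [Hs Hop]]].
    exists (Mod tp X B). split; [|split].
    + eapply Mod_coh; eauto. apply (LT_up _ (opf M X b (E tp)) (wle M)); auto. intros A HA; eapply op_up_tau; eauto.
    + rewrite (sem_Mod M phi0 Hwb Hsent tp X Mu b B Hb Hp). auto.
    + split.
      * intros Z HZ _. inversion HZ; subst. exists B. split; auto.
        rewrite (etaOf_binds phi0 Hwb _ _ _ Hb). simpl; auto.
      * right. exists X, B. split; auto.
  - exists tp. split; [auto|split].
    + pose proof (gfp_post M X b (E tp) w Hpos Hw) as H. unfold opf in H.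
      assert (HX : E tp X = sem M (E tp) (FFix Nu X b)).
      { rewrite (E_fix M phi0 Hwb Hsent tp Nu X b Hb). unfold Env.progb; rewrite Hsd; auto. }
      rewrite <- HX, upd_self in H. auto.
    + split; auto. intros Z HZ Hp. inversion HZ; subst.
      rewrite (etaOf_binds phi0 Hwb _ _ _ Hb) in Hp. unfold Env.progb in Hp; rewrite Hsd in Hp.
      discriminate.
Qed.


Lemma fixL_sem : forall X e b tp w, binds phi0 X e b -> sd X = SL -> coh tp -> sem M (E tp) (FFix e X b) w ->
  exists t', coh t' /\ sem M (E t') b w /\ Rel (FFix e X b) tp t'.
Proof.
  intros X e b tp w Hb Hsd Hc Hw.
  pose proof (binds_mu phi0 Hmu X e b Hb) as [Hmb Hpos].
  assert (Hmono := opf_mono M X b (E tp) Hpos).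
  destruct e.
  - assert (Hp : progb Mu X = true) by (unfold Env.progb; rewrite Hsd; auto).
    destruct (lfp_LT _ (opf M X b (E tp)) w Hw) as [D [HD Hop]].
    exists (Mod tp X D). split; [|split].
    + eapply Mod_coh; eauto. apply (LT_up _ (opf M X b (E tp)) (wle M)); auto.
      intros A HA; eapply op_up_tau; eauto.
    + rewrite (sem_Mod M phi0 Hwb Hsent tp X Mu b D Hb Hp). auto.
    + split.
      * intros Z HZ _. discriminate.
      * right. exists X, D. split; auto. left; eauto.
  - exists tp. split; [auto|split].
    + pose proof (gfp_post M X b (E tp) w Hpos Hw) as H. unfold opf in H.
      assert (HX : E tp X = sem M (E tp) (FFix Nu X b)).
      { rewrite (E_fix M phi0 Hwb Hsent tp Nu X b Hb). unfold Env.progb; rewrite Hsd; auto. }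
      rewrite <- HX, upd_self in H. auto.
    + split; auto. intros Z HZ; discriminate.
Qed.

Lemma regenR_sem : forall X e b tp w, binds phi0 X e b -> sd X = SR -> coh tp -> ~ E tp X w ->
  exists t', coh t' /\ ~ sem M (E t') b w /\ Rel (FVar X) tp t'.
Proof.
  intros X e b tp w Hb Hsd Hc Hw.
  pose proof (binds_mu phi0 Hmu X e b Hb) as [Hmb Hpos].
  assert (Hmono := opf_mono M X b (E tp) Hpos).
  assert (HEX := E_fix M phi0 Hwb Hsent tp e X b Hb).
  destruct e; unfold Env.progb in HEX; rewrite Hsd in HEX.
  - exists tp. split; [auto|split].
    + intro H. apply Hw. rewrite HEX. apply lfp_pre; auto. unfold opf.
      rewrite <- HEX, upd_self. auto.
    + split; auto. intros Z HZ Hp. inversion HZ; subst.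
      rewrite (etaOf_binds phi0 Hwb _ _ _ Hb) in Hp. unfold Env.progb in Hp; rewrite Hsd in Hp.
      discriminate.
  - assert (Hp : progb Nu X = true) by (unfold Env.progb; rewrite Hsd; auto).
    destruct (Hc Nu X b Hb Hp) as [HT Hu]. simpl in HT. rewrite HEX in Hw.
    destruct (UT_decomp _ _ Hmono _ HT w Hw) as [U [HU [Hs Hop]]].
    exists (Mod tp X U). split; [|split].
    + eapply Mod_coh; eauto. apply (UT_up _ (opf M X b (E tp)) (wle M)); auto.
      intros A HA; eapply op_up_tau; eauto.
    + rewrite (sem_Mod M phi0 Hwb Hsent tp X Nu b U Hb Hp). auto.
    + split.
      * intros Z HZ _. inversion HZ; subst. exists U. split; auto.
        rewrite (etaOf_binds phi0 Hwb _ _ _ Hb). simpl; auto.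
      * right. exists X, U. split; auto.
Qed.

Lemma fixR_sem : forall X e b tp w, binds phi0 X e b -> sd X = SR -> coh tp -> ~ sem M (E tp) (FFix e X b) w ->
  exists t', coh t' /\ ~ sem M (E t') b w /\ Rel (FFix e X b) tp t'.
Proof.
  intros X e b tp w Hb Hsd Hc Hw.
  pose proof (binds_mu phi0 Hmu X e b Hb) as [Hmb Hpos].
  assert (Hmono := opf_mono M X b (E tp) Hpos).
  assert (HEX := E_fix M phi0 Hwb Hsent tp e X b Hb).
  destruct e; unfold Env.progb in HEX; rewrite Hsd in HEX.
  - exists tp. split; [auto|split].
    + intro H. apply Hw. apply lfp_pre; auto. unfold opf.
      rewrite <- HEX, upd_self. auto.
    + split; auto. intros Z HZ; discriminate.
  - assert (Hp : progb Nu X = true) by (unfold Env.progb; rewrite Hsd; auto).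
    destruct (gfp_UT _ (opf M X b (E tp)) w Hw) as [U [HU Hop]].
    exists (Mod tp X U). split; [|split].
    + eapply Mod_coh; eauto. apply (UT_up _ (opf M X b (E tp)) (wle M)); auto.
      intros A HA; eapply op_up_tau; eauto.
    + rewrite (sem_Mod M phi0 Hwb Hsent tp X Nu b U Hb Hp). auto.
    + split.
      * intros Z HZ _. discriminate.
      * right. exists X, U. split; auto. left; eauto.
Qed.

End RulesSec.

End Rules.
Import Rules.
Module Steps.
Import ListNotations.
Import ListNotations.

Section StepsSec.
Variable M : CKModel.
Variable phi0 : form.
Hypothesis Hmu : mu_form phi0.
Hypothesis Hwb : well_bounded phi0.
Hypothesis Hsent : sentence phi0.

Notation E := (E M phi0).
Notation progb := (progb phi0).
Notation L := (binders phi0).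
Notation coh := (coh M phi0).
Notation sd := (sd phi0).
Notation holds := (holds M phi0).
Notation SI := (SI M phi0).
Notation SynInv := (SynInv phi0).
Notation wfs := (wfs phi0).
Notation least := (least M phi0).
Notation Rel := (Rel M phi0).
Notation GS := (GS M phi0).
Notation StepOK := (StepOK M phi0).

Lemma get_least : forall c rho sf, SI c rho -> in_sequent c sf -> exists tp, least rho sf tp.
Proof.
  intros c rho sf [_ H] Hin. destruct (H sf Hin) as [tau [Hc Hh]].
  destruct (least_ex M phi0 Hmu Hwb Hsent (fun t => holds rho t sf) tau Hc Hh) as [t0 [H1 [H2 H3]]].
  exists t0; split; auto.
Qed.

Lemma premise_ok : forall c p rho rho' PA PL PR,
  extends (atoms c) (atoms p) PA -> extends (lhs c) (lhs p) PL -> extends (rhs c) (rhs p) PR ->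
  SynInv c -> SI c rho -> (forall l, occurs_label l c -> rho' l = rho l) ->
  (forall t, PA t -> atom_ok M rho' t) ->
  (forall y g, PL (y, g) -> wfs (SL, y, g) /\ exists tau, coh tau /\ holds rho' tau (SL, y, g)) ->
  (forall y g, PR (y, g) -> wfs (SR, y, g) /\ exists tau, coh tau /\ holds rho' tau (SR, y, g)) ->
  SynInv p /\ SI p rho'.
Proof.
  intros c p rho rho' PA PL PR HA HL HR HSyn HSI Hl HPA HPL HPR. split.
  - apply (child_Syn phi0 c p HSyn). intros [[s y] g] Hin. destruct s; simpl in Hin.
    + apply HL in Hin. destruct Hin as [H|H]; [left; exact H|right; apply (HPL y g H)].
    + apply HR in Hin. destruct Hin as [H|H]; [left; exact H|right; apply (HPR y g H)].
  - apply (child_SI M phi0 c p rho rho' HSI Hl).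
    + intros t Ht. apply HA in Ht. destruct Ht; auto.
    + intros [[s y] g] Hin. destruct s; simpl in Hin.
      * apply HL in Hin. destruct Hin as [H|H]; [left; exact H|right; apply (HPL y g H)].
      * apply HR in Hin. destruct Hin as [H|H]; [left; exact H|right; apply (HPR y g H)].
Qed.

Lemma Rel_id : forall g tp, (forall Z, g <> FVar Z) -> Rel g tp tp.
Proof. intros g tp H. split; [intros Z HZ; exfalso; apply (H Z HZ)|left; auto]. Qed.

Definition setl (rho : nat -> W M) (y : nat) (v : W M) : nat -> W M :=
  fun l => if Nat.eqb l y then v else rho l.

Lemma fresh_neq : forall y c l, fresh y c -> occurs_label l c -> l <> y.
Proof. intros y c l Hf Hl ->. apply Hf, Hl. Qed.

Lemma setl_old : forall rho y v c, fresh y c -> forall l, occurs_label l c -> setl rho y v l = rho l.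
Proof. intros. unfold setl. destruct (Nat.eqb_spec l y); auto. exfalso; eapply fresh_neq; eauto. Qed.
Lemma setl_new : forall rho y v, setl rho y v y = v.
Proof. intros; unfold setl; rewrite Nat.eqb_refl; auto. Qed.

Lemma wfs_sub : forall s s' x g h, wfs (s, x, g) -> (forall a, g <> FLDia a) -> subform h g ->
  okside sd s' h -> wfs (s', x, h).
Proof.
  intros s s' x g h [Ho [Hs|[_ [a [Ha _]]]]] Hn Hsub Hoh.
  - split; auto. left. eapply subform_trans; eauto.
  - exfalso; eapply Hn; eauto.
Qed.

Lemma wfs_sub_left : forall s x g, wfs (s, x, g) -> s = SL -> subform g phi0.
Proof. intros s x g [_ [H|[H _]]] Hs; subst; auto; discriminate. Qed.

Ltac sub1 := simpl; right; apply subform_refl.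
Ltac sub2l := simpl; right; left; apply subform_refl.
Ltac sub2r := simpl; right; right; apply subform_refl.

Lemma step_pres : forall c p x y a rho,
  In (ALe x y) (atoms c) -> In (x, a) (lhs c) ->
  same (atoms c) (atoms p) -> extends (lhs c) (lhs p) (fun l => l = (y, a)) ->
  same (rhs c) (rhs p) -> SynInv c -> SI c rho ->
  StepOK c [p] None [fun _ => False] rho.
Proof.
  intros c p x y a rho Ha Hx H1 H2 H3 HSyn HSI.
  assert (Hw := HSyn (SL, x, a) Hx).
  destruct (proj2 HSI (SL, x, a) Hx) as [tau [Hc Hh]].
  exists 0, p, rho. split; [reflexivity|].
  destruct (premise_ok c p rho rho _ _ _ H1 H2 H3 HSyn HSI) as [Hs Hi]; auto.
  - intros t [].
  - intros y' g Heq. inversion Heq; subst. split.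
    + destruct Hw as [Ho Hsub]; split; auto.
    + exists tau; split; auto. simpl in *.
      assert (Hm : mu_form a) by (apply (mu_form_sub phi0 a Hmu); apply (wfs_sub_left SL x a Hw); auto).
      apply (sem_up M a (E tau) Hm (E_upc M phi0 Hmu tau Hc) (rho x) (rho y)); auto.
      apply (proj1 HSI _ Ha).
  - intros y' g [].
  - split; auto. split; auto. split; auto. intros s x' g Heq; discriminate.
Qed.

Lemma step_trans : forall c p x y z rho,
  In (ALe x y) (atoms c) -> In (ALe y z) (atoms c) ->
  extends (atoms c) (atoms p) (fun t => t = ALe x z) ->
  same (lhs c) (lhs p) -> same (rhs c) (rhs p) -> SynInv c -> SI c rho ->
  StepOK c [p] None [fun _ => False] rho.
Proof.
  intros c p x y z rho Ha Hb H1 H2 H3 HSyn HSI.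
  exists 0, p, rho. split; [reflexivity|].
  destruct (premise_ok c p rho rho _ _ _ H1 H2 H3 HSyn HSI) as [Hs Hi]; auto.
  - intros t ->. simpl. eapply wle_trans; [apply (proj1 HSI _ Ha)|apply (proj1 HSI _ Hb)].
  - intros y' g [].
  - intros y' g [].
  - split; auto. split; auto. split; auto. intros s x' g Heq; discriminate.
Qed.

Lemma step_andL : forall c p x a b rho,
  In (x, FAnd a b) (lhs c) -> same (atoms c) (atoms p) ->
  extends (lhs c) (lhs p) (fun l => l = (x, a) \/ l = (x, b)) -> same (rhs c) (rhs p) ->
  SynInv c -> SI c rho ->
  StepOK c [p] (Some (SL, x, FAnd a b)) [fun s => s = (SL, x, a) \/ s = (SL, x, b)] rho.
Proof.
  intros c p x a b rho Hin H1 H2 H3 HSyn HSI.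
  assert (Hw := HSyn (SL, x, FAnd a b) Hin).
  destruct (get_least c rho (SL, x, FAnd a b) HSI Hin) as [tp Htp].
  pose proof Htp as [Hc [Hh _]]. simpl in Hh. destruct Hh as [Ha Hb].
  assert (Hw' := Hw). destruct Hw' as [[Ho1 Ho2] _].
  exists 0, p, rho. split; [reflexivity|].
  destruct (premise_ok c p rho rho _ _ _ H1 H2 H3 HSyn HSI) as [Hs Hi]; auto.
  - intros t [].
  - intros y g [Heq|Heq]; inversion Heq; subst; split.
    + eapply wfs_sub; eauto; [congruence|sub2l].
    + exists tp; split; auto.
    + eapply wfs_sub; eauto; [congruence|sub2r].
    + exists tp; split; auto.
  - intros y g [].
  - split; auto. split; auto. split; auto. intros s x' g Heq; inversion Heq; subst.
    exists tp. split; auto. intros sf Hm _. simpl in Hm.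
    destruct Hm as [->| ->]; exists tp; (split; [auto|split; [simpl; auto|apply Rel_id; congruence]]).
Qed.

Lemma step_andR : forall c p1 p2 x a b rho,
  In (x, FAnd a b) (rhs c) ->
  same (atoms c) (atoms p1) -> same (lhs c) (lhs p1) ->
  extends (rhs c) (rhs p1) (fun l => l = (x, a)) ->
  same (atoms c) (atoms p2) -> same (lhs c) (lhs p2) ->
  extends (rhs c) (rhs p2) (fun l => l = (x, b)) ->
  SynInv c -> SI c rho ->
  StepOK c [p1; p2] (Some (SR, x, FAnd a b))
    [fun s => s = (SR, x, a); fun s => s = (SR, x, b)] rho.
Proof.
  intros c p1 p2 x a b rho Hin H1 H2 H3 H4 H5 H6 HSyn HSI.
  assert (Hw := HSyn (SR, x, FAnd a b) Hin).
  destruct (get_least c rho (SR, x, FAnd a b) HSI Hin) as [tp Htp].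
  pose proof Htp as [Hc [Hh _]]. simpl in Hh.
  assert (Hw' := Hw). destruct Hw' as [[Ho1 Ho2] _].
  destruct (classic (sem M (E tp) a (rho x))) as [Ha|Ha].
  - assert (Hb : ~ sem M (E tp) b (rho x)) by tauto.
    exists 1, p2, rho. split; [reflexivity|].
    destruct (premise_ok c p2 rho rho _ _ _ H4 H5 H6 HSyn HSI) as [Hs Hi]; auto.
    + intros t [].
    + intros y g [].
    + intros y g Heq; inversion Heq; subst; split.
      * eapply wfs_sub; eauto; [congruence|sub2r].
      * exists tp; split; auto.
    + split; auto. split; auto. split; auto. intros s x' g Heq; inversion Heq; subst.
      exists tp. split; auto. intros sf Hm _. simpl in Hm. subst.
      exists tp; split; [auto|split; [simpl; auto|apply Rel_id; congruence]].
  - exists 0, p1, rho. split; [reflexivity|].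
    destruct (premise_ok c p1 rho rho _ _ _ H1 H2 H3 HSyn HSI) as [Hs Hi]; auto.
    + intros t [].
    + intros y g [].
    + intros y g Heq; inversion Heq; subst; split.
      * eapply wfs_sub; eauto; [congruence|sub2l].
      * exists tp; split; auto.
    + split; auto. split; auto. split; auto. intros s x' g Heq; inversion Heq; subst.
      exists tp. split; auto. intros sf Hm _. simpl in Hm. subst.
      exists tp; split; [auto|split; [simpl; auto|apply Rel_id; congruence]].
Qed.


Lemma step_orL : forall c p1 p2 x a b rho,
  In (x, FOr a b) (lhs c) ->
  same (atoms c) (atoms p1) -> extends (lhs c) (lhs p1) (fun l => l = (x, a)) ->
  same (rhs c) (rhs p1) ->
  same (atoms c) (atoms p2) -> extends (lhs c) (lhs p2) (fun l => l = (x, b)) ->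
  same (rhs c) (rhs p2) ->
  SynInv c -> SI c rho ->
  StepOK c [p1; p2] (Some (SL, x, FOr a b))
    [fun s => s = (SL, x, a); fun s => s = (SL, x, b)] rho.
Proof.
  intros c p1 p2 x a b rho Hin H1 H2 H3 H4 H5 H6 HSyn HSI.
  assert (Hw := HSyn (SL, x, FOr a b) Hin).
  destruct (get_least c rho (SL, x, FOr a b) HSI Hin) as [tp Htp].
  pose proof Htp as [Hc [Hh _]]. simpl in Hh.
  assert (Hw' := Hw). destruct Hw' as [[Ho1 Ho2] _].
  destruct Hh as [Ha|Hb].
  - exists 0, p1, rho. split; [reflexivity|].
    destruct (premise_ok c p1 rho rho _ _ _ H1 H2 H3 HSyn HSI) as [Hs Hi]; auto.
    + intros t [].
    + intros y g Heq; inversion Heq; subst; split.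
      * eapply wfs_sub; eauto; [congruence|sub2l].
      * exists tp; split; auto.
    + intros y g [].
    + split; auto. split; auto. split; auto. intros s x' g Heq; inversion Heq; subst.
      exists tp. split; auto. intros sf Hm _. simpl in Hm. subst.
      exists tp; split; [auto|split; [simpl; auto|apply Rel_id; congruence]].
  - exists 1, p2, rho. split; [reflexivity|].
    destruct (premise_ok c p2 rho rho _ _ _ H4 H5 H6 HSyn HSI) as [Hs Hi]; auto.
    + intros t [].
    + intros y g Heq; inversion Heq; subst; split.
      * eapply wfs_sub; eauto; [congruence|sub2r].
      * exists tp; split; auto.
    + intros y g [].
    + split; auto. split; auto. split; auto. intros s x' g Heq; inversion Heq; subst.
      exists tp. split; auto. intros sf Hm _. simpl in Hm. subst.
      exists tp; split; [auto|split; [simpl; auto|apply Rel_id; congruence]].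
Qed.

Lemma step_orR : forall c p x a b rho,
  In (x, FOr a b) (rhs c) ->
  same (atoms c) (atoms p) -> same (lhs c) (lhs p) ->
  extends (rhs c) (rhs p) (fun l => l = (x, a) \/ l = (x, b)) ->
  SynInv c -> SI c rho ->
  StepOK c [p] (Some (SR, x, FOr a b)) [fun s => s = (SR, x, a) \/ s = (SR, x, b)] rho.
Proof.
  intros c p x a b rho Hin H1 H2 H3 HSyn HSI.
  assert (Hw := HSyn (SR, x, FOr a b) Hin).
  destruct (get_least c rho (SR, x, FOr a b) HSI Hin) as [tp Htp].
  pose proof Htp as [Hc [Hh _]]. simpl in Hh.
  assert (Hw' := Hw). destruct Hw' as [[Ho1 Ho2] _].
  exists 0, p, rho. split; [reflexivity|].
  destruct (premise_ok c p rho rho _ _ _ H1 H2 H3 HSyn HSI) as [Hs Hi]; auto.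
  - intros t [].
  - intros y g [].
  - intros y g [Heq|Heq]; inversion Heq; subst; split.
    + eapply wfs_sub; eauto; [congruence|sub2l].
    + exists tp; split; auto. simpl; tauto.
    + eapply wfs_sub; eauto; [congruence|sub2r].
    + exists tp; split; auto. simpl; tauto.
  - split; auto. split; auto. split; auto. intros s x' g Heq; inversion Heq; subst.
    exists tp. split; auto. intros sf Hm _. simpl in Hm.
    destruct Hm as [->| ->]; exists tp; (split; [auto|split; [simpl; tauto|apply Rel_id; congruence]]).
Qed.

Lemma step_impL : forall c p1 p2 x a b rho,
  In (x, FImp a b) (lhs c) ->
  same (atoms c) (atoms p1) -> same (lhs c) (lhs p1) ->
  extends (rhs c) (rhs p1) (fun l => l = (x, a)) ->
  same (atoms c) (atoms p2) -> extends (lhs c) (lhs p2) (fun l => l = (x, b)) ->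
  same (rhs c) (rhs p2) ->
  SynInv c -> SI c rho ->
  StepOK c [p1; p2] (Some (SL, x, FImp a b))
    [fun s => s = (SR, x, a); fun s => s = (SL, x, b)] rho.
Proof.
  intros c p1 p2 x a b rho Hin H1 H2 H3 H4 H5 H6 HSyn HSI.
  assert (Hw := HSyn (SL, x, FImp a b) Hin).
  destruct (get_least c rho (SL, x, FImp a b) HSI Hin) as [tp Htp].
  pose proof Htp as [Hc [Hh _]]. simpl in Hh.
  assert (Hw' := Hw). destruct Hw' as [[Ho1 Ho2] _].
  destruct (classic (sem M (E tp) a (rho x))) as [Ha|Ha].
  - assert (Hb : sem M (E tp) b (rho x)) by (apply Hh; auto; apply wle_refl).
    exists 1, p2, rho. split; [reflexivity|].
    destruct (premise_ok c p2 rho rho _ _ _ H4 H5 H6 HSyn HSI) as [Hs Hi]; auto.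
    + intros t [].
    + intros y g Heq; inversion Heq; subst; split.
      * eapply wfs_sub; eauto; [congruence|sub2r].
      * exists tp; split; auto.
    + intros y g [].
    + split; auto. split; auto. split; auto. intros s x' g Heq; inversion Heq; subst.
      exists tp. split; auto. intros sf Hm _. simpl in Hm. subst.
      exists tp; split; [auto|split; [simpl; auto|apply Rel_id; congruence]].
  - exists 0, p1, rho. split; [reflexivity|].
    destruct (premise_ok c p1 rho rho _ _ _ H1 H2 H3 HSyn HSI) as [Hs Hi]; auto.
    + intros t [].
    + intros y g [].
    + intros y g Heq; inversion Heq; subst; split.
      * eapply wfs_sub; eauto; [congruence|sub2l].
      * exists tp; split; auto.
    + split; auto. split; auto. split; auto. intros s x' g Heq; inversion Heq; subst.
      exists tp. split; auto. intros sf Hm _. simpl in Hm. subst.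
      exists tp; split; [auto|split; [simpl; auto|apply Rel_id; congruence]].
Qed.

Lemma step_impR : forall c p x y a b rho,
  In (x, FImp a b) (rhs c) -> fresh y c ->
  extends (atoms c) (atoms p) (fun t => t = ALe x y) ->
  extends (lhs c) (lhs p) (fun l => l = (y, a)) ->
  extends (rhs c) (rhs p) (fun l => l = (y, b)) ->
  SynInv c -> SI c rho ->
  StepOK c [p] (Some (SR, x, FImp a b)) [fun s => s = (SL, y, a) \/ s = (SR, y, b)] rho.
Proof.
  intros c p x y a b rho Hin Hfr H1 H2 H3 HSyn HSI.
  assert (Hw := HSyn (SR, x, FImp a b) Hin).
  destruct (get_least c rho (SR, x, FImp a b) HSI Hin) as [tp Htp].
  pose proof Htp as [Hc [Hh _]]. simpl in Hh.
  assert (Hw' := Hw). destruct Hw' as [[Ho1 Ho2] _].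
  assert (Hex : exists v, wle M (rho x) v /\ sem M (E tp) a v /\ ~ sem M (E tp) b v).
  { apply NNPP; intro Hn; apply Hh; intros v Hv Ha. apply NNPP; intro Hb. apply Hn; eauto. }
  destruct Hex as [v [Hv [Ha Hb]]].
  assert (Hx : occurs_label x c) by (right; eauto).
  set (rho' := setl rho y v).
  assert (Hold : forall l, occurs_label l c -> rho' l = rho l) by (apply setl_old; auto).
  assert (Hy : rho' y = v) by apply setl_new.
  clearbody rho'.
  exists 0, p, rho'. split; [reflexivity|].
  destruct (premise_ok c p rho rho' _ _ _ H1 H2 H3 HSyn HSI) as [Hs Hi]; auto.
  - intros t ->. simpl. rewrite Hold, Hy; auto.
  - intros y' g Heq; inversion Heq; subst; split.
    + eapply wfs_sub with (x := x); eauto; [congruence|sub2l].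
    + exists tp; split; auto; simpl; rewrite Hy; auto.
  - intros y' g Heq; inversion Heq; subst; split.
    + eapply wfs_sub with (x := x); eauto; [congruence|sub2r].
    + exists tp; split; auto; simpl; rewrite Hy; auto.
  - split; auto. split; auto. split; auto. intros s x' g Heq; inversion Heq; subst.
    exists tp. split; auto. intros sf Hm _. simpl in Hm.
    destruct Hm as [->| ->]; exists tp; (split; [auto|split; [simpl; try rewrite Hy; auto|apply Rel_id; congruence]]).
Qed.

Lemma wfs_relabel : forall s x y g, wfs (s, x, g) -> wfs (s, y, g).
Proof. intros s x y g H; exact H. Qed.

Lemma step_boxL : forall c p x a rho,
  In (x, FBox a) (lhs c) ->
  same (atoms c) (atoms p) ->
  extends (lhs c) (lhs p) (fun l => exists y, l = (y, a) /\ In (ARel x y) (atoms c)) ->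
  same (rhs c) (rhs p) ->
  SynInv c -> SI c rho ->
  StepOK c [p] (Some (SL, x, FBox a))
    [fun s => exists y, s = (SL, y, a) /\ In (ARel x y) (atoms c)] rho.
Proof.
  intros c p x a rho Hin H1 H2 H3 HSyn HSI.
  assert (Hw := HSyn (SL, x, FBox a) Hin).
  destruct (get_least c rho (SL, x, FBox a) HSI Hin) as [tp Htp].
  pose proof Htp as [Hc [Hh _]]. simpl in Hh.
  assert (Hw' := Hw). destruct Hw' as [Ho1 _].
  assert (Hy : forall y, In (ARel x y) (atoms c) -> sem M (E tp) a (rho y)).
  { intros y Hy. apply (Hh (rho x) (rho y)); [apply wle_refl|apply (proj1 HSI _ Hy)]. }
  exists 0, p, rho. split; [reflexivity|].
  destruct (premise_ok c p rho rho _ _ _ H1 H2 H3 HSyn HSI) as [Hs Hi]; auto.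
  - intros t [].
  - intros y g [y' [Heq Hat]]; inversion Heq; subst; split.
    + apply wfs_relabel with (x := x). eapply wfs_sub; eauto; [congruence|sub1].
    + exists tp; split; auto. simpl; auto.
  - intros y g [].
  - split; auto. split; auto. split; auto. intros s x' g Heq; inversion Heq; subst.
    exists tp. split; auto. intros sf Hm _. simpl in Hm. destruct Hm as [y [-> Hat]].
    exists tp; split; [auto|split; [simpl; auto|apply Rel_id; congruence]].
Qed.

Lemma step_boxR : forall c p x y z a rho,
  In (x, FBox a) (rhs c) -> fresh y c -> fresh z c -> y <> z ->
  extends (atoms c) (atoms p) (fun t => t = ALe x y \/ t = ARel y z) ->
  same (lhs c) (lhs p) ->
  extends (rhs c) (rhs p) (fun l => l = (z, a)) ->
  SynInv c -> SI c rho ->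
  StepOK c [p] (Some (SR, x, FBox a)) [fun s => s = (SR, z, a)] rho.
Proof.
  intros c p x y z a rho Hin Hfy Hfz Hyz H1 H2 H3 HSyn HSI.
  assert (Hw := HSyn (SR, x, FBox a) Hin).
  destruct (get_least c rho (SR, x, FBox a) HSI Hin) as [tp Htp].
  pose proof Htp as [Hc [Hh _]]. simpl in Hh.
  assert (Hw' := Hw). destruct Hw' as [Ho1 _].
  assert (Hex : exists v u, wle M (rho x) v /\ wR M v u /\ ~ sem M (E tp) a u).
  { apply NNPP; intro Hn; apply Hh; intros v u Hv Hu. apply NNPP; intro Ha. apply Hn; eauto. }
  destruct Hex as [v [u [Hv [Hu Ha]]]].
  assert (Hx : occurs_label x c) by (right; eauto).
  set (rho' := setl (setl rho y v) z u).
  assert (Hold : forall l, occurs_label l c -> rho' l = rho l).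
  { intros l Hl. unfold rho'. rewrite (setl_old _ z u c Hfz l Hl), (setl_old _ y v c Hfy l Hl); auto. }
  assert (Hz : rho' z = u) by apply setl_new.
  assert (Hy : rho' y = v).
  { unfold rho', setl. destruct (Nat.eqb_spec y z); [contradiction|]. rewrite Nat.eqb_refl; auto. }
  clearbody rho'.
  exists 0, p, rho'. split; [reflexivity|].
  destruct (premise_ok c p rho rho' _ _ _ H1 H2 H3 HSyn HSI) as [Hs Hi]; auto.
  - intros t [->| ->]; simpl.
    + rewrite Hold, Hy; auto.
    + rewrite Hy, Hz; auto.
  - intros y' g [].
  - intros y' g Heq; inversion Heq; subst; split.
    + apply wfs_relabel with (x := x). eapply wfs_sub; eauto; [congruence|sub1].
    + exists tp; split; auto; simpl; rewrite Hz; auto.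
  - split; auto. split; auto. split; auto. intros s x' g Heq; inversion Heq; subst.
    exists tp. split; auto. intros sf Hm _. simpl in Hm. subst.
    exists tp; split; [auto|split; [simpl; try rewrite Hz; auto|apply Rel_id; congruence]].
Qed.

Lemma step_diaL : forall c p x y a rho,
  In (x, FDia a) (lhs c) -> fresh y c ->
  extends (atoms c) (atoms p) (fun t => t = ARel x y) ->
  extends (lhs c) (lhs p) (fun l => l = (y, a)) ->
  same (rhs c) (rhs p) ->
  SynInv c -> SI c rho ->
  StepOK c [p] (Some (SL, x, FDia a)) [fun s => s = (SL, y, a)] rho.
Proof.
  intros c p x y a rho Hin Hfr H1 H2 H3 HSyn HSI.
  assert (Hw := HSyn (SL, x, FDia a) Hin).
  destruct (get_least c rho (SL, x, FDia a) HSI Hin) as [tp Htp].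
  pose proof Htp as [Hc [Hh _]]. simpl in Hh.
  assert (Hw' := Hw). destruct Hw' as [Ho1 _].
  destruct (Hh (rho x) (wle_refl M _)) as [u [Hu Ha]].
  assert (Hx : occurs_label x c) by (right; eauto).
  set (rho' := setl rho y u).
  assert (Hold : forall l, occurs_label l c -> rho' l = rho l) by (apply setl_old; auto).
  assert (Hy : rho' y = u) by apply setl_new.
  clearbody rho'.
  exists 0, p, rho'. split; [reflexivity|].
  destruct (premise_ok c p rho rho' _ _ _ H1 H2 H3 HSyn HSI) as [Hs Hi]; auto.
  - intros t ->. simpl. rewrite Hold, Hy; auto.
  - intros y' g Heq; inversion Heq; subst; split.
    + apply wfs_relabel with (x := x). eapply wfs_sub; eauto; [congruence|sub1].
    + exists tp; split; auto; simpl; rewrite Hy; auto.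
  - intros y' g [].
  - split; auto. split; auto. split; auto. intros s x' g Heq; inversion Heq; subst.
    exists tp. split; auto. intros sf Hm _. simpl in Hm. subst.
    exists tp; split; [auto|split; [simpl; try rewrite Hy; auto|apply Rel_id; congruence]].
Qed.

Lemma step_diaR : forall c p x y a rho,
  In (x, FDia a) (rhs c) -> fresh y c ->
  extends (atoms c) (atoms p) (fun t => t = ALe x y) ->
  same (lhs c) (lhs p) ->
  extends (rhs c) (rhs p) (fun l => l = (y, FLDia a)) ->
  SynInv c -> SI c rho ->
  StepOK c [p] (Some (SR, x, FDia a)) [fun s => s = (SR, y, FLDia a)] rho.
Proof.
  intros c p x y a rho Hin Hfr H1 H2 H3 HSyn HSI.
  assert (Hw := HSyn (SR, x, FDia a) Hin).
  destruct (get_least c rho (SR, x, FDia a) HSI Hin) as [tp Htp].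
  pose proof Htp as [Hc [Hh _]]. simpl in Hh.
  assert (Hw' := Hw). destruct Hw' as [Ho1 [Hsub|[_ [a' [Ha' _]]]]]; [|discriminate].
  assert (Hex : exists v, wle M (rho x) v /\ ~ exists u, wR M v u /\ sem M (E tp) a u).
  { apply NNPP; intro Hn; apply Hh; intros v Hv. apply NNPP; intro Ha. apply Hn; eauto. }
  destruct Hex as [v [Hv Hn]].
  assert (Hx : occurs_label x c) by (right; eauto).
  set (rho' := setl rho y v).
  assert (Hold : forall l, occurs_label l c -> rho' l = rho l) by (apply setl_old; auto).
  assert (Hy : rho' y = v) by apply setl_new.
  clearbody rho'.
  exists 0, p, rho'. split; [reflexivity|].
  destruct (premise_ok c p rho rho' _ _ _ H1 H2 H3 HSyn HSI) as [Hs Hi]; auto.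
  - intros t ->. simpl. rewrite Hold, Hy; auto.
  - intros y' g [].
  - intros y' g Heq; inversion Heq; subst; split.
    + split; [simpl; auto|]. right. split; auto. exists a; split; auto.
      eapply subform_trans; [exact Hsub|sub1].
    + exists tp; split; auto; simpl; rewrite Hy; auto.
  - split; auto. split; auto. split; auto. intros s x' g Heq; inversion Heq; subst.
    exists tp. split; auto. intros sf Hm _. simpl in Hm. subst.
    exists tp; split; [auto|split; [simpl; try rewrite Hy; auto|apply Rel_id; congruence]].
Qed.

Lemma step_ldiaR : forall c p x a rho,
  In (x, FLDia a) (rhs c) ->
  same (atoms c) (atoms p) -> same (lhs c) (lhs p) ->
  extends (rhs c) (rhs p) (fun l => exists y, l = (y, a) /\ In (ARel x y) (atoms c)) ->
  SynInv c -> SI c rho ->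
  StepOK c [p] (Some (SR, x, FLDia a))
    [fun s => exists y, s = (SR, y, a) /\ In (ARel x y) (atoms c)] rho.
Proof.
  intros c p x a rho Hin H1 H2 H3 HSyn HSI.
  assert (Hw := HSyn (SR, x, FLDia a) Hin).
  destruct (get_least c rho (SR, x, FLDia a) HSI Hin) as [tp Htp].
  pose proof Htp as [Hc [Hh _]]. simpl in Hh.
  assert (Hwa : wfs (SR, x, a)).
  { destruct Hw as [Ho1 [Hsub|[_ [a' [Ha' Hsub]]]]].
    - exfalso. apply (mu_form_sub phi0 _ Hmu Hsub).
    - inversion Ha'; subst. split; auto. }
  assert (Hy : forall y, In (ARel x y) (atoms c) -> ~ sem M (E tp) a (rho y)).
  { intros y Hy Ha. apply Hh. exists (rho y); split; auto. apply (proj1 HSI _ Hy). }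
  exists 0, p, rho. split; [reflexivity|].
  destruct (premise_ok c p rho rho _ _ _ H1 H2 H3 HSyn HSI) as [Hs Hi]; auto.
  - intros t [].
  - intros y g [].
  - intros y g [y' [Heq Hat]]; inversion Heq; subst; split.
    + apply wfs_relabel with (x := x); auto.
    + exists tp; split; auto. simpl; auto.
  - split; auto. split; auto. split; auto. intros s x' g Heq; inversion Heq; subst.
    exists tp. split; auto. intros sf Hm _. simpl in Hm. destruct Hm as [y [-> Hat]].
    exists tp; split; [auto|split; [simpl; auto|apply Rel_id; congruence]].
Qed.

Lemma step_fixL : forall c p x e X b rho,
  binds phi0 X e b -> In (x, FFix e X b) (lhs c) ->
  same (atoms c) (atoms p) -> extends (lhs c) (lhs p) (fun l => l = (x, b)) ->
  same (rhs c) (rhs p) ->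
  SynInv c -> SI c rho ->
  StepOK c [p] (Some (SL, x, FFix e X b)) [fun s => s = (SL, x, b)] rho.
Proof.
  intros c p x e X b rho Hb Hin H1 H2 H3 HSyn HSI.
  assert (Hw := HSyn (SL, x, FFix e X b) Hin).
  destruct (get_least c rho (SL, x, FFix e X b) HSI Hin) as [tp Htp].
  pose proof Htp as [Hc [Hh _]]. simpl in Hh.
  assert (Hw' := Hw). destruct Hw' as [[Hsd Ho1] _].
  destruct (fixL_sem M phi0 Hmu Hwb Hsent X e b tp (rho x) Hb Hsd Hc Hh) as [t' [Hc' [Hh' HR]]].
  exists 0, p, rho. split; [reflexivity|].
  destruct (premise_ok c p rho rho _ _ _ H1 H2 H3 HSyn HSI) as [Hs Hi]; auto.
  - intros t [].
  - intros y g Heq; inversion Heq; subst; split.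
    + eapply wfs_sub; eauto; [congruence|sub1].
    + exists t'; split; auto.
  - intros y g [].
  - split; auto. split; auto. split; auto. intros s x' g Heq; inversion Heq; subst.
    exists tp. split; auto. intros sf Hm _. simpl in Hm. subst.
    exists t'; split; [auto|split; [simpl; auto|auto]].
Qed.

Lemma step_fixR : forall c p x e X b rho,
  binds phi0 X e b -> In (x, FFix e X b) (rhs c) ->
  same (atoms c) (atoms p) -> same (lhs c) (lhs p) ->
  extends (rhs c) (rhs p) (fun l => l = (x, b)) ->
  SynInv c -> SI c rho ->
  StepOK c [p] (Some (SR, x, FFix e X b)) [fun s => s = (SR, x, b)] rho.
Proof.
  intros c p x e X b rho Hb Hin H1 H2 H3 HSyn HSI.
  assert (Hw := HSyn (SR, x, FFix e X b) Hin).
  destruct (get_least c rho (SR, x, FFix e X b) HSI Hin) as [tp Htp].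
  pose proof Htp as [Hc [Hh _]]. simpl in Hh.
  assert (Hw' := Hw). destruct Hw' as [[Hsd Ho1] _].
  destruct (fixR_sem M phi0 Hmu Hwb Hsent X e b tp (rho x) Hb Hsd Hc Hh) as [t' [Hc' [Hh' HR]]].
  exists 0, p, rho. split; [reflexivity|].
  destruct (premise_ok c p rho rho _ _ _ H1 H2 H3 HSyn HSI) as [Hs Hi]; auto.
  - intros t [].
  - intros y g [].
  - intros y g Heq; inversion Heq; subst; split.
    + eapply wfs_sub; eauto; [congruence|sub1].
    + exists t'; split; auto.
  - split; auto. split; auto. split; auto. intros s x' g Heq; inversion Heq; subst.
    exists tp. split; auto. intros sf Hm _. simpl in Hm. subst.
    exists t'; split; [auto|split; [simpl; auto|auto]].
Qed.

Lemma wfs_binder : forall s x X e b, binds phi0 X e b -> sd X = s -> wfs (s, x, b).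
Proof.
  intros s x X e b Hb Hsd. split.
  - rewrite <- Hsd. apply (okside_binder phi0 Hmu Hwb Hsent X e b Hb).
  - left. eapply subform_trans; [exact Hb|sub1].
Qed.

Lemma step_regenL : forall c p x e X b rho,
  binds phi0 X e b -> In (x, FVar X) (lhs c) ->
  same (atoms c) (atoms p) -> extends (lhs c) (lhs p) (fun l => l = (x, b)) ->
  same (rhs c) (rhs p) ->
  SynInv c -> SI c rho ->
  StepOK c [p] (Some (SL, x, FVar X)) [fun s => s = (SL, x, b)] rho.
Proof.
  intros c p x e X b rho Hb Hin H1 H2 H3 HSyn HSI.
  assert (Hw := HSyn (SL, x, FVar X) Hin).
  destruct (get_least c rho (SL, x, FVar X) HSI Hin) as [tp Htp].
  pose proof Htp as [Hc [Hh _]]. simpl in Hh.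
  assert (Hw' := Hw). destruct Hw' as [Hsd _]. simpl in Hsd.
  destruct (regenL_sem M phi0 Hmu Hwb Hsent X e b tp (rho x) Hb Hsd Hc Hh) as [t' [Hc' [Hh' HR]]].
  exists 0, p, rho. split; [reflexivity|].
  destruct (premise_ok c p rho rho _ _ _ H1 H2 H3 HSyn HSI) as [Hs Hi]; auto.
  - intros t [].
  - intros y g Heq; inversion Heq; subst; split.
    + eapply wfs_binder; eauto.
    + exists t'; split; auto.
  - intros y g [].
  - split; auto. split; auto. split; auto. intros s x' g Heq; inversion Heq; subst.
    exists tp. split; auto. intros sf Hm _. simpl in Hm. subst.
    exists t'; split; [auto|split; [simpl; auto|auto]].
Qed.

Lemma step_regenR : forall c p x e X b rho,
  binds phi0 X e b -> In (x, FVar X) (rhs c) ->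
  same (atoms c) (atoms p) -> same (lhs c) (lhs p) ->
  extends (rhs c) (rhs p) (fun l => l = (x, b)) ->
  SynInv c -> SI c rho ->
  StepOK c [p] (Some (SR, x, FVar X)) [fun s => s = (SR, x, b)] rho.
Proof.
  intros c p x e X b rho Hb Hin H1 H2 H3 HSyn HSI.
  assert (Hw := HSyn (SR, x, FVar X) Hin).
  destruct (get_least c rho (SR, x, FVar X) HSI Hin) as [tp Htp].
  pose proof Htp as [Hc [Hh _]]. simpl in Hh.
  assert (Hw' := Hw). destruct Hw' as [Hsd _]. simpl in Hsd.
  destruct (regenR_sem M phi0 Hmu Hwb Hsent X e b tp (rho x) Hb Hsd Hc Hh) as [t' [Hc' [Hh' HR]]].
  exists 0, p, rho. split; [reflexivity|].
  destruct (premise_ok c p rho rho _ _ _ H1 H2 H3 HSyn HSI) as [Hs Hi]; auto.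
  - intros t [].
  - intros y g [].
  - intros y g Heq; inversion Heq; subst; split.
    + eapply wfs_binder; eauto.
    + exists t'; split; auto.
  - split; auto. split; auto. split; auto. intros s x' g Heq; inversion Heq; subst.
    exists tp. split; auto. intros sf Hm _. simpl in Hm. subst.
    exists t'; split; [auto|split; [simpl; auto|auto]].
Qed.

Lemma rule_step : forall c ps pr ms rho, rule phi0 c ps pr ms -> SynInv c -> SI c rho ->
  StepOK c ps pr ms rho.
Proof.
  intros c ps pr ms rho Hr HSyn HSI. destruct Hr.
  - eapply step_pres; eauto.
  - eapply step_trans with (y := y); eauto.
  - eapply step_andL; eauto.
  - eapply step_andR; eauto.
  - eapply step_orL; eauto.
  - eapply step_orR; eauto.
  - eapply step_impL; eauto.
  - eapply step_impR; eauto.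
  - eapply step_boxL; eauto.
  - eapply step_boxR with (y := y) (z := z); eauto.
  - eapply step_diaL; eauto.
  - eapply step_diaR; eauto.
  - eapply step_ldiaR; eauto.
  - eapply step_fixL; eauto.
  - eapply step_fixR; eauto.
  - eapply step_regenL; eauto.
  - eapply step_regenR; eauto.
Qed.

End StepsSec.

End Steps.
Import Steps.
Module Branch.
Import ListNotations.
Import ListNotations.

Lemma nth_map_seq : forall {A} (f : nat -> A) n s i p, nth_error (map f (seq s n)) i = Some p ->
  i < n /\ f (s + i) = p.
Proof.
  induction n; simpl; intros s i p H.
  - destruct i; discriminate.
  - destruct i as [|i]; simpl in H.
    + inversion H; subst. split; [lia|]. rewrite Nat.add_0_r; auto.
    + destruct (IHn (S s) i p H) as [H1 H2]. split; [lia|]. rewrite <- H2. f_equal; lia.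
Qed.

Lemma branch_S : forall f n, branch f (S n) = branch f n ++ [f n].
Proof. intros. unfold branch. rewrite seq_S, map_app. simpl. auto. Qed.

Section BranchSec.
Variable M : CKModel.
Variable phi0 : form.
Hypothesis Hmu : mu_form phi0.
Hypothesis Hwb : well_bounded phi0.
Hypothesis Hsent : sentence phi0.
Variable P : PreProof phi0.

Notation E := (E M phi0).
Notation coh := (coh M phi0).
Notation holds := (holds M phi0).
Notation SI := (SI M phi0).
Notation SynInv := (SynInv phi0).
Notation GS := (GS M phi0).

Definition Inv (a : list nat) (rho : nat -> W M) : Prop :=
  node P a /\ SynInv (seqt P a) /\ SI (seqt P a) rho.

Definition Q (a : list nat) (rho : nat -> W M) (i : nat) (rho' : nat -> W M) : Prop :=
  Inv (a ++ [i]) rho' /\ (forall l, occurs_label l (seqt P a) -> rho' l = rho l) /\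
  GS (seqt P a) (princ P a) (nth i (minors P a) (fun _ => False)) (seqt P (a ++ [i])) rho rho' /\
  rule phi0 (seqt P a) (map (fun j => seqt P (a ++ [j])) (seq 0 (nchild P a))) (princ P a) (minors P a).

Lemma step_ex : forall a rho, Inv a rho -> exists i rho', Q a rho i rho'.
Proof.
  intros a rho [Hn [HSyn HSI]].
  destruct (node_step phi0 P a Hn) as [[_ Hax]|[Hpos Hr]].
  - exfalso. destruct Hax as [x [p [Hl Hr]]].
    destruct (proj2 HSI (SR, x, FProp p) Hr) as [t2 [_ H2]]. simpl in H2.
    destruct Hl as [Hl|Hl].
    + destruct (proj2 HSI (SL, x, FBot) Hl) as [t1 [_ H1]]. simpl in H1.
      apply H2. apply Wbot_V; auto.
    + destruct (proj2 HSI (SL, x, FProp p) Hl) as [t1 [_ H1]]. simpl in H1. auto.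
  - destruct (rule_step M phi0 Hmu Hwb Hsent _ _ _ _ rho Hr HSyn HSI)
      as [i [p [rho' [Hnth [HSyn' [HSI' [Hl HGS]]]]]]].
    destruct (nth_map_seq _ _ _ _ _ Hnth) as [Hi Hp]. simpl in Hp. subst p.
    exists i, rho'. split; [|split; [auto|split; auto]].
    split; [|split; auto]. apply node_child; auto.
Qed.

Definition stF (st : list nat * (nat -> W M)) : nat * (nat -> W M) :=
  match excluded_middle_informative (Inv (fst st) (snd st)) with
  | left H => let ex := step_ex _ _ H in
              let i := proj1_sig (constructive_indefinite_description _ ex) in
              let ex2 := proj2_sig (constructive_indefinite_description _ ex) in
              (i, proj1_sig (constructive_indefinite_description _ ex2))
  | right _ => (0, snd st)
  end.

Lemma stF_ok : forall a rho, Inv a rho -> Q a rho (fst (stF (a, rho))) (snd (stF (a, rho))).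
Proof.
  intros a rho H. unfold stF. simpl.
  destruct (excluded_middle_informative (Inv a rho)) as [H'|H']; [|contradiction].
  simpl. destruct (constructive_indefinite_description _ (step_ex a rho H')) as [i Hi]. simpl.
  destruct (constructive_indefinite_description _ Hi) as [rho' Hr]. simpl. auto.
Qed.

Variable w0 : W M.
Fixpoint st (n : nat) : list nat * (nat -> W M) :=
  match n with
  | 0 => ([], fun _ => w0)
  | S n => let s := st n in (fst s ++ [fst (stF s)], snd (stF s))
  end.
Definition fb (n : nat) : nat := fst (stF (st n)).
Definition rhob (n : nat) : nat -> W M := snd (st n).

Lemma st_branch : forall n, fst (st n) = branch fb n.
Proof.
  induction n; simpl; auto. rewrite branch_S, <- IHn. unfold fb. auto.
Qed.

Hypothesis Hinit : Inv [] (fun _ => w0).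

Lemma st_inv : forall n, Inv (fst (st n)) (snd (st n)).
Proof.
  induction n; simpl; auto.
  destruct (st n) as [a rho] eqn:E. simpl in *.
  exact (proj1 (stF_ok a rho IHn)).
Qed.

Lemma st_Q : forall n, Q (branch fb n) (rhob n) (fb n) (rhob (S n)).
Proof.
  intros n. pose proof (st_inv n) as H. unfold rhob, fb. rewrite <- st_branch.
  simpl. destruct (st n) as [a rho]. simpl in *. apply stF_ok; auto.
Qed.

Lemma branch_inv : forall n, Inv (branch fb n) (rhob n).
Proof. intro n. rewrite <- st_branch. apply st_inv. Qed.

Lemma fb_branch : is_branch P fb.
Proof. intro n. apply (proj1 (branch_inv n)). Qed.

End BranchSec.

End Branch.
Import Branch.
Module Trace.
Import ListNotations.
Import ListNotations.

Definition minor_rel (phi0 : form) (g h : form) : Prop :=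
  match g with
  | FAnd a b | FOr a b | FImp a b => h = a \/ h = b
  | FBox a | FLDia a => h = a
  | FDia a => h = a \/ h = FLDia a
  | FFix _ _ a => h = a
  | FVar Z => exists e b, binds phi0 Z e b /\ h = b
  | _ => False
  end.

Lemma rule_minor : forall phi0 c ps s x g ms, rule phi0 c ps (Some (s, x, g)) ms ->
  forall i s' y h, nth i ms (fun _ => False) (s', y, h) -> minor_rel phi0 g h.
Proof.
  intros phi0 c ps s x g ms Hr. inversion Hr; subst; intros i s' y' h Hn;
  destruct i as [|[|i]]; simpl in Hn; try contradiction;
  try (destruct i; simpl in Hn; contradiction);
  repeat match type of Hn with
         | _ \/ _ => destruct Hn as [Hn|Hn]
         | exists _, _ => let y0 := fresh in destruct Hn as [y0 [Hn _]]
         end;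
  injection Hn; intros; subst; simpl; eauto.
Qed.

Lemma rule_var : forall phi0 c ps s x Z ms, rule phi0 c ps (Some (s, x, FVar Z)) ms ->
  exists e b, binds phi0 Z e b.
Proof. intros. inversion H; subst; eauto. Qed.

Section TraceSec.
Variable M : CKModel.
Variable phi0 : form.
Hypothesis Hmu : mu_form phi0.
Hypothesis Hwb : well_bounded phi0.
Hypothesis Hsent : sentence phi0.
Variable P : PreProof phi0.
Variable w0 : W M.
Hypothesis Hinit : Inv M phi0 P [] (fun _ => w0).

Notation f := (fb M phi0 Hmu Hwb Hsent P w0).
Notation rh := (rhob M phi0 Hmu Hwb Hsent P w0).
Notation L := (binders phi0).
Notation coh := (coh M phi0).
Notation ltl := (ltl M phi0).
Notation eql := (eql M phi0).
Notation least := (least M phi0).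

Lemma Qn : forall n, Q M phi0 P (branch f n) (rh n) (f n) (rh (S n)).
Proof. apply st_Q; auto. Qed.
Lemma Invn : forall n, Inv M phi0 P (branch f n) (rh n).
Proof. apply branch_inv; auto. Qed.

Lemma least_eql : forall rho sf t1 t2, least rho sf t1 -> least rho sf t2 -> eql L t1 t2.
Proof.
  intros rho sf t1 t2 [H1 [H2 H3]] [H4 [H5 H6]].
  destruct (H3 t2 H4 H5) as [A|A]; destruct (H6 t1 H1 H2) as [B|B]; auto.
  - exfalso. apply (ltl_irrefl M phi0 L t1). eapply ltl_trans; eauto.
  - exfalso. apply (ltl_eql_false M phi0 L t1 t2 A). apply eql_sym; auto.
Qed.

Variable t : nat -> sform.
Hypothesis Htr : is_trace P f t.

Lemma least_at : forall i, exists tau, least (rh i) (t i) tau.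
Proof.
  intro i. destruct (Invn i) as [_ [_ HSI]].
  apply (get_least M phi0 Hmu Hwb Hsent (seqt P (branch f i))); auto. apply (proj1 Htr).
Qed.
Definition m (i : nat) : env M := proj1_sig (constructive_indefinite_description _ (least_at i)).
Lemma m_least : forall i, least (rh i) (t i) (m i).
Proof. intro i. unfold m. destruct (constructive_indefinite_description _ (least_at i)); auto. Qed.

Lemma regen_binds : forall s Z i, regen_at P f t s Z i -> exists e b, binds phi0 Z e b.
Proof.
  intros s Z i [x [Ht [Hp _]]]. destruct (Qn i) as [_ [_ [_ Hr]]].
  rewrite Hp, Ht in Hr. eapply rule_var; eauto.
Qed.

Lemma exN_list : forall l, exists N, forall i Z s, N <= i -> In Z l -> regen_at P f t s Z i ->
  any_regen_inf P f t Z.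
Proof.
  induction l as [|Z0 l [N1 IH]].
  - exists 0; intros i Z s _ [].
  - destruct (classic (any_regen_inf P f t Z0)) as [Hi|Hi].
    + exists N1. intros i Z s HN [->|HZ] Hr; auto. eapply IH; eauto.
    + assert (Hfin : forall s, exists n, forall i, n <= i -> ~ regen_at P f t s Z0 i).
      { intro s. apply NNPP; intro Hn. apply Hi. destruct s; [left|right]; intro n;
        apply NNPP; intro Hn2; apply Hn; exists n; intros i Hi2 Hr; apply Hn2; eauto. }
      destruct (Hfin SL) as [n1 Hn1]. destruct (Hfin SR) as [n2 Hn2].
      exists (max N1 (max n1 n2)). intros i Z s HN [->|HZ] Hr.
      * exfalso. destruct s; [apply (Hn1 i)|apply (Hn2 i)]; auto; lia.
      * apply (IH i Z s); auto; lia.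
Qed.

Lemma exN : exists N, forall i Z s, N <= i -> regen_at P f t s Z i -> any_regen_inf P f t Z.
Proof.
  destruct (exN_list (names L)) as [N HN]. exists N. intros i Z s Hi Hr.
  eapply HN; eauto. destruct (regen_binds s Z i Hr) as [e [b Hb]].
  apply in_map_iff. exists (e, Z, b). split; auto. apply In_binders; auto.
Qed.

Lemma no_progress : progressing P f t -> False.
Proof.
  intros [X [e [b [HbX [Hany [Hout Hside]]]]]].
  destruct exN as [N HN].
  assert (HsX : exists sX, regen_inf P f t sX X) by (destruct Hside as [[_ H]|[_ H]]; eauto).
  destruct HsX as [sX HsX].
  assert (Hprog : progb phi0 e X = true).
  { destruct (HsX 0) as [k [_ [x [Hk _]]]].
    destruct (Invn k) as [_ [HSyn _]].
    pose proof (HSyn (t k) (proj1 Htr k)) as Hw. rewrite Hk in Hw. destruct Hw as [Hsd _].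
    simpl in Hsd. unfold Env.progb. rewrite Hsd.
    destruct Hside as [[-> H]|[-> H]]; destruct sX; auto;
    destruct (H 0) as [k' [_ [x' [Hk' _]]]];
    destruct (Invn k') as [_ [HSyn' _]];
    pose proof (HSyn' (t k') (proj1 Htr k')) as Hw'; rewrite Hk' in Hw'; destruct Hw' as [Hsd' _];
    simpl in Hsd'; congruence. }
  destruct (HsX N) as [k0 [Hk0 Hrk0]].
  destruct (binders_split _ _ _ _ HbX) as [l1 [l2 HLs]].
  set (Pf := Pfx X e b l1).
  set (lePf := fun a c => ltl Pf a c \/ eql Pf a c).
  assert (Hwithin : forall d s x h, t (S k0 + d) = (s, x, h) ->
            subform h b \/ exists a, h = FLDia a /\ subform a b).
  { induction d as [|d IHd]; intros s x h Ht.
    - destruct Hrk0 as [x0 [Hk [Hp Hmin]]]. destruct (Qn k0) as [_ [_ [_ Hr]]].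
      rewrite Hp, Hk in Hr. unfold minor_at in Hmin. rewrite Nat.add_0_r in Ht. rewrite Ht in Hmin.
      pose proof (rule_minor _ _ _ _ _ _ _ Hr _ _ _ _ Hmin) as Hmr. simpl in Hmr.
      destruct Hmr as [e' [b' [Hb' ->]]].
      destruct (binds_unique phi0 Hwb X e' b' e b Hb' HbX) as [_ ->]. left; apply subform_refl.
    - replace (S k0 + S d) with (S (S k0 + d)) in Ht by lia.
      destruct (proj2 Htr (S k0 + d)) as [Hst|[Hp Hmin]].
      + rewrite Hst in Ht. eapply IHd; eauto.
      + destruct (t (S k0 + d)) as [[s0 x0] g] eqn:Eg.
        destruct (Qn (S k0 + d)) as [_ [_ [_ Hr]]]. rewrite Hp in Hr.
        unfold minor_at in Hmin. rewrite Ht in Hmin.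
        pose proof (rule_minor _ _ _ _ _ _ _ Hr _ _ _ _ Hmin) as Hmr.
        destruct g; simpl in Hmr; try contradiction.
        *
          destruct Hmr as [e' [b' [Hb' ->]]].
          assert (Hreg : regen_at P f t s0 X0 (S k0 + d)).
          { exists x0. rewrite Eg. split; auto. split; auto. unfold minor_at. rewrite Ht; auto. }
          assert (Hinf := HN (S k0 + d) _ _ ltac:(lia) Hreg).
          pose proof (Hout _ _ _ Hb' Hinf) as Hsub. destruct Hsub as [Heq|Hsub].
          -- inversion Heq; subst. left; apply subform_refl.
          -- left. eapply subform_trans; [exact Hsub|]. simpl; right; apply subform_refl.
        * subst. destruct (IHd _ _ _ eq_refl) as [H|[a [Ha _]]]; [|discriminate].
          left. eapply subform_trans; eauto. destruct Hmr; subst; simpl; auto using subform_refl.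
        * subst. destruct (IHd _ _ _ eq_refl) as [H|[a [Ha _]]]; [|discriminate].
          left. eapply subform_trans; eauto. destruct Hmr; subst; simpl; auto using subform_refl.
        * subst. destruct (IHd _ _ _ eq_refl) as [H|[a [Ha _]]]; [|discriminate].
          left. eapply subform_trans; eauto. destruct Hmr; subst; simpl; auto using subform_refl.
        * subst. destruct (IHd _ _ _ eq_refl) as [H|[a [Ha _]]]; [|discriminate].
          left. eapply subform_trans; eauto. simpl; right; apply subform_refl.
        * destruct (IHd _ _ _ eq_refl) as [H|[a [Ha _]]]; [|discriminate].
          destruct Hmr; subst.
          -- left. eapply subform_trans; eauto. simpl; right; apply subform_refl.
          -- right. exists g; split; auto. eapply subform_trans; eauto. simpl; right; apply subform_refl.
        * subst. destruct (IHd _ _ _ eq_refl) as [H|[a [Ha Hs]]].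
          -- left. eapply subform_trans; eauto. simpl; right; apply subform_refl.
          -- inversion Ha; subst; left; auto.
        * subst. destruct (IHd _ _ _ eq_refl) as [H|[a [Ha _]]]; [|discriminate].
          left. eapply subform_trans; eauto. simpl; right; apply subform_refl. }
  assert (HLP : L = Pf ++ (binders b ++ l2)) by (unfold Pf, Pfx; rewrite HLs, <- app_assoc; auto).
  assert (HeqP : forall a c, eql L a c -> eql Pf a c).
  { intros a c H. rewrite HLP in H. apply eql_app in H. tauto. }
  assert (Hle_trans : forall a c d, lePf a c -> lePf c d -> lePf a d).
  { intros a c d [H1|H1] [H2|H2]; unfold lePf.
    - left; eapply ltl_trans; eauto.
    - left; eapply ltl_eql_r; eauto.
    - left; eapply ltl_eql_l; eauto.
    - right; eapply eql_trans; eauto. }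
  assert (Hle_lt : forall a c d, lePf a c -> ltl Pf c d -> ltl Pf a d).
  { intros a c d [H1|H1] H2; [eapply ltl_trans; eauto|eapply ltl_eql_l; eauto]. }
  assert (Hlt_le : forall a c d, ltl Pf a c -> lePf c d -> ltl Pf a d).
  { intros a c d H1 [H2|H2]; [eapply ltl_trans; eauto|eapply ltl_eql_r; eauto]. }
  assert (Hfull : forall a c, ltl L a c \/ eql L a c -> lePf a c).
  { intros a c H. apply (full_to_P M phi0 X e b l1 l2 HLs); auto. }
  assert (Hmove : forall i s x g, t i = (s, x, g) -> princ P (branch f i) = Some (s, x, g) ->
            minor_at P f i (t (S i)) ->
            exists tp t', eql Pf tp (m i) /\ lePf (m (S i)) t' /\ Rel M phi0 g tp t').
  { intros i s x g Ht Hp Hmin.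
    destruct (Qn i) as [_ [_ [HGS _]]].
    destruct (HGS s x g Hp) as [tp [Htp Hall]].
    assert (Hin : in_sequent (seqt P (branch f i ++ [f i])) (t (S i))).
    { rewrite <- branch_S. apply (proj1 Htr). }
    destruct (Hall (t (S i)) Hmin Hin) as [t' [Hc' [Hh' HR]]].
    exists tp, t'. split; [|split; auto].
    - apply HeqP. apply (least_eql (rh i) (t i)); auto; [rewrite Ht; auto|apply m_least].
    - apply Hfull. destruct (m_least (S i)) as [_ [_ H3]]. apply H3; auto. }
  assert (Hetax : etaOf phi0 X = e) by (apply (etaOf_binds phi0 Hwb X e b HbX)).
  assert (HregX : forall i s, regen_at P f t s X i -> ltl Pf (m (S i)) (m i)).
  { intros i s [x [Ht [Hp Hmin]]]. rewrite Ht in Hp.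
    destruct (Hmove i s x (FVar X) Ht Hp Hmin) as [tp [t' [Heq [Hle [HR1 _]]]]].
    destruct (HR1 X eq_refl) as [D [-> Hs]]; [rewrite Hetax; auto|].
    rewrite Hetax in Hs.
    pose proof (Mod_ltl_P M phi0 Hwb X e b l1 l2 HLs HbX tp D Hprog Hs) as Hlt.
    eapply Hle_lt; [exact Hle|]. eapply Hlt_le; [exact Hlt|]. right; exact Heq. }
  assert (Hstep : forall i, k0 <= i -> lePf (m (S i)) (m i)).
  { intros i Hi.
    destruct (classic (exists s, regen_at P f t s X i)) as [[s Hr]|HnX].
    - left. eapply HregX; eauto.
    - destruct (proj2 Htr i) as [Hst|[Hp Hmin]].
      + destruct (Qn i) as [_ [Hag _]].
        destruct (m_least i) as [Hc [Hh _]].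
        destruct (m_least (S i)) as [_ [_ H3]].
        apply Hfull. apply H3; auto. rewrite Hst.
        eapply holds_same; [apply (proj1 Htr i)| |exact Hh]. exact Hag.
      + destruct (t i) as [[s x] g] eqn:Ht.
        destruct (Hmove i s x g Ht Hp Hmin) as [tp [t' [Heq [Hle [_ HR2]]]]].
        eapply Hle_trans; [exact Hle|]. eapply Hle_trans; [|right; exact Heq].
        destruct HR2 as [->|[Z [D [-> Hg]]]]; [right; apply eql_refl|].
        right. apply (Mod_eql_P M phi0 Hwb X e b l1 l2 HLs HbX).
        destruct Hg as [[e0 [b0 ->]]| ->].
        * assert (Hik : k0 <> i).
          { intro; subst. apply HnX. exists sX; auto. }
          destruct (Hwithin (i - S k0) s x (FFix e0 Z b0)) as [Hsub|[a [Ha _]]];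
            [replace (S k0 + (i - S k0)) with i by lia; auto| |discriminate].
          exists e, b, e0, b0. split; auto.
        * assert (Hreg : regen_at P f t s Z i).
          { exists x. rewrite Ht. split; auto. }
          assert (Hinf := HN i _ _ ltac:(lia) Hreg).
          destruct (regen_binds s Z i Hreg) as [e' [b' Hb']].
          destruct (Hout _ _ _ Hb' Hinf) as [Heq'|Hsub].
          -- inversion Heq'; subst. exfalso; apply HnX; eauto.
          -- exists e, b, e', b'. split; auto. }
  assert (Hchain : forall d j, k0 <= j -> lePf (m (j + d)) (m j)).
  { induction d as [|d IH]; intros j Hj.
    - rewrite Nat.add_0_r. right; apply eql_refl.
    - replace (j + S d) with (S (j + d)) by lia.
      eapply Hle_trans; [apply Hstep; lia|apply IH; auto]. }
  assert (Hdec : forall j, k0 <= j -> exists i, k0 <= i /\ ltl Pf (m i) (m j)).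
  { intros j Hj. destruct (HsX j) as [k [Hk Hrk]]. exists (S k). split; [lia|].
    eapply Hlt_le; [eapply HregX; eauto|].
    replace k with (j + (k - j)) by lia. apply Hchain; auto. }
  assert (Hacc := prefix_acc M phi0 Hmu Hwb Hsent Pf (binders b ++ l2) HLP (m k0)
                    (proj1 (m_least k0))).
  assert (Hfin : forall tau, Acc (fun t1 t2 => coh t1 /\ coh t2 /\ ltl Pf t1 t2) tau ->
            forall j, k0 <= j -> tau = m j -> False).
  { intros tau H. induction H as [tau _ IH]. intros j Hj ->.
    destruct (Hdec j Hj) as [i [Hi Hlt]].
    apply (IH (m i)) with (j := i); auto. split; [apply (proj1 (m_least i))|].
    split; [apply (proj1 (m_least j))|auto]. }
  exact (Hfin _ Hacc k0 (le_n _) eq_refl).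
Qed.

End TraceSec.

End Trace.
Import Trace.
Import ListNotations.
Import ListNotations.

Theorem mainTheorem6 :
  forall (phi : form), mu_form phi -> well_named phi -> sentence phi ->
  forall (M : CKModel) (w : W M), ~ sat M w phi ->
  forall (x : nat) (P : PreProof phi), root_is P x phi -> ~ is_proof P.
Proof.
  intros phi Hmu [_ Hwb] Hsent M w Hns x P [Ha [Hl Hr]] Hpf.
  assert (Hinit : Inv M phi P [] (fun _ => w)).
  { split; [apply node_root|split].
    - intros [[s y] g] Hin. destruct s; simpl in Hin.
      + destruct (proj2 (Hl _) (or_introl Hin)).
      + destruct (proj2 (Hr _) (or_introl Hin)) as [Heq|[]]. injection Heq; intros <- <-.
        split; [apply okside_phi0; auto|left; apply subform_refl].
    - split.
      + intros t Ht. destruct (proj2 (Ha _) (or_introl Ht)).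
      + intros [[s y] g] Hin. destruct s; simpl in Hin.
        * destruct (proj2 (Hl _) (or_introl Hin)).
        * destruct (proj2 (Hr _) (or_introl Hin)) as [Heq|[]]. injection Heq; intros <- <-.
          exists (tautriv M phi). split; [apply tautriv_coh; auto|]. simpl.
          rewrite (sem_agree M phi (E M phi (tautriv M phi)) (fun _ _ => False)); auto.
          intros Y HY; exfalso; apply (Hsent Y HY). }
  destruct (Hpf _ (fb_branch M phi Hmu Hwb Hsent P w Hinit)) as [t [Htr Hprog]].
  exact (no_progress M phi Hmu Hwb Hsent P w Hinit t Htr Hprog).
Qed.
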